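(* Let $\Omega\subset\mathbb{R}^3$ be open, let $x\in\Omega$ and $0<r<\operatorname{dist}(x,\partial\Omega)$. Let $u\in C^2(\Omega)^3$ satisfy $\nabla\cdot u=0$, let $v\in\mathbb{R}^3$, and let $p$ be a (classical) solution of $-\Delta p=\nabla\cdot(u\cdot\nabla u)$ in $\Omega$. Then $$p(x)+\tfrac13|u(x)-v|^2=\overline{p}(x,r)+\fint_{|\xi|=1}\big|\xi\cdot(u(x+r\xi)-v)\big|^2dS(\xi)+\int_0^r\frac{d\rho}{\rho}\fint_{|\xi|=1}\Big[3\big|\xi\cdot(u(x+\rho\xi)-v)\big|^2-|u(x+\rho\xi)-v|^2\Big]dS(\xi).$$
   Context: For a function $f$, $\overline{f}(x,r)=\frac{1}{4\pi r^2}\int_{|x-y|=r}f(y)\,dS(y)=\fint_{|\xi|=1}f(x+r\xi)\,dS(\xi)$ denotes the spherical average, where $\fint$ denotes the integral over the unit sphere divided by its area $4\pi$. *)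

(* Defs.v *)
From Stdlib Require Import Reals Lra.
From Coquelicot Require Import Coquelicot.
Open Scope R_scope.

Inductive idx : Type := I1 | I2 | I3.
Definition vec3 := idx -> R.

Definition sum3 (f : idx -> R) : R := f I1 + f I2 + f I3.
Definition dot (a b : vec3) : R := sum3 (fun i => a i * b i).
Definition norm3 (a : vec3) : R := sqrt (dot a a).
Definition vadd (a b : vec3) : vec3 := fun i => a i + b i.
Definition vsub (a b : vec3) : vec3 := fun i => a i - b i.
Definition vscal (c : R) (a : vec3) : vec3 := fun i => c * a i.
Definition ebasis (i : idx) : vec3 := fun j =>
  match i, j with
  | I1, I1 | I2, I2 | I3, I3 => 1
  | _, _ => 0
  end.

Definition open3 (O : vec3 -> Prop) : Prop :=
  forall y, O y -> exists e, 0 < e /\ forall z, norm3 (vsub z y) < e -> O z.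

Definition in_closure (O : vec3 -> Prop) (z : vec3) : Prop :=
  forall e, 0 < e -> exists w, O w /\ norm3 (vsub w z) < e.
Definition in_interior (O : vec3 -> Prop) (z : vec3) : Prop :=
  exists e, 0 < e /\ forall w, norm3 (vsub w z) < e -> O w.
Definition boundary (O : vec3 -> Prop) (z : vec3) : Prop :=
  in_closure O z /\ ~ in_interior O z.

(* r < dist(x, boundary O), with dist(x, empty set) = +infinity:
   the infimum of |z - x| over boundary points z is strictly larger than r. *)
Definition lt_dist_boundary (r : R) (x : vec3) (O : vec3 -> Prop) : Prop :=
  exists d, r < d /\ forall z, boundary O z -> d <= norm3 (vsub z x).

Definition partial (i : idx) (f : vec3 -> R) (y : vec3) : R :=
  Derive (fun t => f (vadd y (vscal t (ebasis i)))) 0.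

Definition cont_on (O : vec3 -> Prop) (f : vec3 -> R) : Prop :=
  forall y, O y -> forall e, 0 < e -> exists d, 0 < d /\
    forall z, norm3 (vsub z y) < d -> Rabs (f z - f y) < e.

Fixpoint Ck (k : nat) (O : vec3 -> Prop) (f : vec3 -> R) : Prop :=
  match k with
  | O => cont_on O f
  | S k' => cont_on O f /\
      forall i, (forall y, O y -> ex_derive (fun t => f (vadd y (vscal t (ebasis i)))) 0)
                /\ Ck k' O (partial i f)
  end.

Definition ucomp (u : vec3 -> vec3) (i : idx) : vec3 -> R := fun y => u y i.
Definition div (u : vec3 -> vec3) (y : vec3) : R :=
  sum3 (fun i => partial i (ucomp u i) y).
Definition convect (u : vec3 -> vec3) : vec3 -> vec3 :=
  fun y i => sum3 (fun j => u y j * partial j (ucomp u i) y).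
Definition laplacian (f : vec3 -> R) (y : vec3) : R :=
  sum3 (fun i => partial i (partial i f) y).

Definition sph (theta phi : R) : vec3 := fun i =>
  match i with
  | I1 => sin theta * cos phi
  | I2 => sin theta * sin phi
  | I3 => cos theta
  end.

(* Averaged surface integral over the unit sphere:
   (1/(4 pi)) * integral over S^2 of g dS, with dS = sin theta dtheta dphi. *)
Definition sph_avg (g : vec3 -> R) : R :=
  / (4 * PI) *
  RInt (fun phi => RInt (fun theta => g (sph theta phi) * sin theta) 0 PI) 0 (2 * PI).

Definition sph_mean (f : vec3 -> R) (x : vec3) (r : R) : R :=
  sph_avg (fun xi => f (vadd x (vscal r xi))).

(* Main.v *)
Require Import Defs.
From Stdlib Require Import Reals Lra Psatz Nsatz FunctionalExtensionality ClassicalEpsilon Classical.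
From Coquelicot Require Import Coquelicot.
Open Scope R_scope.


Lemma dot_nonneg a : 0 <= dot a a.
Proof. unfold dot, sum3. nra. Qed.

Lemma norm3_nonneg a : 0 <= norm3 a.
Proof. apply sqrt_pos. Qed.

Lemma norm3_comp a i : Rabs (a i) <= norm3 a.
Proof.
  unfold norm3. rewrite <- sqrt_Rsqr_abs. apply sqrt_le_1_alt.
  unfold dot, sum3, Rsqr. destruct i; nra.
Qed.

Lemma norm3_le_sum a : norm3 a <= Rabs (a I1) + Rabs (a I2) + Rabs (a I3).
Proof.
  unfold norm3. set (S := Rabs (a I1) + Rabs (a I2) + Rabs (a I3)).
  assert (HS : 0 <= S) by (unfold S; pose proof (Rabs_pos (a I1)); pose proof (Rabs_pos (a I2)); pose proof (Rabs_pos (a I3)); lra).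
  rewrite <- (sqrt_Rsqr S HS). apply sqrt_le_1_alt.
  unfold dot, sum3, Rsqr, S.
  pose proof (Rabs_pos (a I1)); pose proof (Rabs_pos (a I2)); pose proof (Rabs_pos (a I3)).
  assert (E1 : a I1 * a I1 = Rabs (a I1) * Rabs (a I1)) by (rewrite <- Rabs_mult; rewrite Rabs_right; nra).
  assert (E2 : a I2 * a I2 = Rabs (a I2) * Rabs (a I2)) by (rewrite <- Rabs_mult; rewrite Rabs_right; nra).
  assert (E3 : a I3 * a I3 = Rabs (a I3) * Rabs (a I3)) by (rewrite <- Rabs_mult; rewrite Rabs_right; nra).
  rewrite E1, E2, E3. nra.
Qed.

Lemma norm3_small a e : (forall i, Rabs (a i) < e / 3) -> norm3 a < e.
Proof.
  intros H. eapply Rle_lt_trans. apply norm3_le_sum.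
  pose proof (H I1); pose proof (H I2); pose proof (H I3). lra.
Qed.

Lemma norm3_scal c a : norm3 (vscal c a) = Rabs c * norm3 a.
Proof.
  unfold norm3. rewrite <- sqrt_Rsqr_abs. rewrite <- sqrt_mult_alt.
  f_equal. unfold dot, sum3, vscal, Rsqr. ring. apply Rle_0_sqr.
Qed.

Lemma cauchy_schwarz a b : dot a b <= norm3 a * norm3 b.
Proof.
  unfold norm3. rewrite <- sqrt_mult_alt by apply dot_nonneg.
  destruct (Rle_or_lt (dot a b) 0) as [H|H].
  - pose proof (sqrt_pos (dot a a * dot b b)). lra.
  - rewrite <- (sqrt_Rsqr (dot a b)) by lra. apply sqrt_le_1_alt.
    unfold dot, sum3, Rsqr.
    set (a1 := a I1); set (a2 := a I2); set (a3 := a I3); set (b1 := b I1); set (b2 := b I2); set (b3 := b I3).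
    assert (L : (a1*a1+a2*a2+a3*a3)*(b1*b1+b2*b2+b3*b3) - (a1*b1+a2*b2+a3*b3)*(a1*b1+a2*b2+a3*b3)
      = (a1*b2-a2*b1)*(a1*b2-a2*b1) + (a1*b3-a3*b1)*(a1*b3-a3*b1) + (a2*b3-a3*b2)*(a2*b3-a3*b2)) by ring.
    pose proof (Rle_0_sqr (a1*b2-a2*b1)); pose proof (Rle_0_sqr (a1*b3-a3*b1)); pose proof (Rle_0_sqr (a2*b3-a3*b2)).
    unfold Rsqr in *. lra.
Qed.

Lemma norm3_triangle a b : norm3 (vadd a b) <= norm3 a + norm3 b.
Proof.
  pose proof (norm3_nonneg a); pose proof (norm3_nonneg b).
  unfold norm3 at 1. rewrite <- (sqrt_Rsqr (norm3 a + norm3 b)) by lra.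
  apply sqrt_le_1_alt.
  assert (E : dot (vadd a b) (vadd a b) = dot a a + 2 * dot a b + dot b b)
    by (unfold dot, sum3, vadd; ring).
  rewrite E. pose proof (cauchy_schwarz a b).
  assert (Ha : dot a a = norm3 a * norm3 a) by (unfold norm3; rewrite sqrt_sqrt; auto using dot_nonneg).
  assert (Hb : dot b b = norm3 b * norm3 b) by (unfold norm3; rewrite sqrt_sqrt; auto using dot_nonneg).
  unfold Rsqr. nra.
Qed.

Lemma vext (a b : vec3) : (forall i, a i = b i) -> a = b.
Proof. intros; apply functional_extensionality; auto. Qed.

Lemma norm3_zero : norm3 (fun _ => 0) = 0.
Proof. unfold norm3, dot, sum3. replace (0*0+0*0+0*0) with 0 by ring. apply sqrt_0. Qed.


Definition cont_pt (f : vec3 -> R) y := forall e, 0 < e -> exists d, 0 < d /\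
  forall z, norm3 (vsub z y) < d -> Rabs (f z - f y) < e.

Definition C1v (O : vec3 -> Prop) (f : vec3 -> R) (Df : idx -> vec3 -> R) : Prop :=
  cont_on O f /\ (forall j, cont_on O (Df j)) /\
  (forall (g : R -> vec3) (dg : vec3) t, O (g t) ->
     (forall i, is_derive (fun s => g s i) t (dg i)) ->
     is_derive (fun s => f (g s)) t (sum3 (fun j => dg j * Df j (g t)))).

Lemma norm3_mono a b : (forall i, Rabs (a i) <= Rabs (b i)) -> norm3 a <= norm3 b.
Proof.
  intros H. unfold norm3. apply sqrt_le_1_alt. unfold dot, sum3.
  assert (forall i, a i * a i <= b i * b i).
  { intro i. specialize (H i).
    assert (a i * a i = Rabs (a i) * Rabs (a i)) by (rewrite <- Rabs_mult, Rabs_right; nra).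
    assert (b i * b i = Rabs (b i) * Rabs (b i)) by (rewrite <- Rabs_mult, Rabs_right; nra).
    pose proof (Rabs_pos (a i)). nra. }
  pose proof (H0 I1); pose proof (H0 I2); pose proof (H0 I3). lra.
Qed.

Lemma is_derive_eq (f : R -> R) x l l' : is_derive f x l -> l = l' -> is_derive f x l'.
Proof. intros H ->; auto. Qed.

Lemma scalRE (a b : R) : scal a b = a * b.
Proof. reflexivity. Qed.
Lemma plusRE (a b : R) : plus a b = a + b.
Proof. reflexivity. Qed.
Lemma multRE (a b : R) : mult a b = a * b.
Proof. reflexivity. Qed.

Ltac Rnorm := repeat match goal with
  | |- context [mult ?a ?b] => change (mult a b) with (Rmult a b)
  | |- context [plus ?a ?b] => change (plus a b) with (Rplus a b)
  | |- context [scal ?a ?b] => change (scal a b) with (Rmult a b)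
  | |- context [opp ?a] => change (opp a) with (Ropp a)
  | |- context [minus ?a ?b] => change (minus a b) with (Rminus a b)
  | |- context [@zero ?G] => change (@zero G) with R0
  | |- context [@one ?G] => change (@one G) with R1
  end.
Ltac Req := Rnorm; match goal with |- @eq _ ?a ?b => change (@eq R a b) end.

Lemma shift_derive f e z t :
  ex_derive (fun s => f (vadd (vadd z (vscal t e)) (vscal s e))) 0 ->
  is_derive (fun t' => f (vadd z (vscal t' e))) t
     (Derive (fun s => f (vadd (vadd z (vscal t e)) (vscal s e))) 0).
Proof.
  intros H. apply Derive_correct in H.
  set (G := fun s => f (vadd (vadd z (vscal t e)) (vscal s e))) in *.
  apply (is_derive_ext (fun t' => G (t' - t))).
  { intros t'. unfold G. f_equal. apply vext. intros i. unfold vadd, vscal. ring. }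
  assert (Hl : is_derive (fun t' => t' - t) t 1).
  { auto_derive; auto. }
  assert (H' : is_derive G (t - t) (Derive G 0)) by (replace (t-t) with 0 by ring; exact H).
  pose proof (is_derive_comp G (fun t' => t' - t) t _ _ H' Hl) as Hc. rewrite scalRE, Rmult_1_l in Hc. exact Hc.
Qed.

Lemma line_step (O : vec3 -> Prop) f i y z h e :
  (forall w, O w -> ex_derive (fun t => f (vadd w (vscal t (ebasis i)))) 0) ->
  (forall t, Rmin 0 h <= t <= Rmax 0 h -> O (vadd z (vscal t (ebasis i))) /\
      Rabs (partial i f (vadd z (vscal t (ebasis i))) - partial i f y) <= e) ->
  Rabs (f (vadd z (vscal h (ebasis i))) - f z - h * partial i f y) <= e * Rabs h.
Proof.
  intros Hd Hs.
  set (g := fun t => f (vadd z (vscal t (ebasis i)))).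
  assert (Hg : forall t, Rmin 0 h <= t <= Rmax 0 h ->
     is_derive g t (partial i f (vadd z (vscal t (ebasis i))))).
  { intros t Ht. apply shift_derive. apply Hd. apply Hs; auto. }
  destruct (MVT_gen g 0 h (fun t => partial i f (vadd z (vscal t (ebasis i))))) as [c [Hc Hm]].
  - intros x Hx. apply Hg. lra.
  - intros x Hx. apply continuity_pt_filterlim. apply (ex_derive_continuous (K:=R_AbsRing) (V:=R_NormedModule) g).
    eexists. apply Hg. auto.
  - assert (Hz : g 0 = f z).
    { unfold g. f_equal. apply vext. intros j. unfold vadd, vscal. ring. }
    unfold g in Hm, Hz. rewrite Hz in Hm.
    replace (f (vadd z (vscal h (ebasis i))) - f z - h * partial i f y)
      with ((partial i f (vadd z (vscal c (ebasis i))) - partial i f y) * h) by (rewrite Hm; ring).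
    rewrite Rabs_mult. apply Rmult_le_compat_r. apply Rabs_pos. apply Hs; auto.
Qed.

Definition mkv (a b c : R) : vec3 := fun i => match i with I1 => a | I2 => b | I3 => c end.

Lemma between_abs t h : Rmin 0 h <= t <= Rmax 0 h -> Rabs t <= Rabs h.
Proof.
  intros [H1 H2]. unfold Rmin, Rmax in *. destruct (Rle_dec 0 h).
  - rewrite !Rabs_right; lra.
  - rewrite !Rabs_left1; lra.
Qed.

Lemma Rabs_triang3 a b c : Rabs (a + b + c) <= Rabs a + Rabs b + Rabs c.
Proof.
  eapply Rle_trans. apply Rabs_triang. pose proof (Rabs_triang a b). lra.
Qed.

Lemma frechet (O : vec3 -> Prop) f y :
  open3 O ->
  (forall i w, O w -> ex_derive (fun t => f (vadd w (vscal t (ebasis i)))) 0) ->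
  (forall i, cont_on O (partial i f)) -> O y ->
  forall e, 0 < e -> exists d, 0 < d /\ forall k, norm3 k < d ->
    Rabs (f (vadd y k) - f y - sum3 (fun j => k j * partial j f y))
      <= e * (Rabs (k I1) + Rabs (k I2) + Rabs (k I3)).
Proof.
  intros Hop Hd Hc Hy e He.
  destruct (Hop y Hy) as [d0 [Hd0 Hb]].
  destruct (Hc I1 y Hy e He) as [d1 [Hd1 Hc1]].
  destruct (Hc I2 y Hy e He) as [d2 [Hd2 Hc2]].
  destruct (Hc I3 y Hy e He) as [d3 [Hd3 Hc3]].
  exists (Rmin d0 (Rmin d1 (Rmin d2 d3))). split.
  { repeat apply Rmin_pos; auto. }
  intros k Hk.
  assert (Hnear : forall w, norm3 (vsub w y) <= norm3 k -> O w /\ forall i,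
      Rabs (partial i f w - partial i f y) <= e).
  { intros w Hw. assert (Hw' : norm3 (vsub w y) < Rmin d0 (Rmin d1 (Rmin d2 d3))) by lra.
    split. apply Hb. eapply Rlt_le_trans. exact Hw'. apply Rmin_l.
    intros i; destruct i; apply Rlt_le.
    - apply Hc1. eapply Rlt_le_trans. exact Hw'. eapply Rle_trans. apply Rmin_r. apply Rmin_l.
    - apply Hc2. eapply Rlt_le_trans. exact Hw'. eapply Rle_trans. apply Rmin_r.
      eapply Rle_trans. apply Rmin_r. apply Rmin_l.
    - apply Hc3. eapply Rlt_le_trans. exact Hw'. eapply Rle_trans. apply Rmin_r.
      eapply Rle_trans. apply Rmin_r. apply Rmin_r. }
  set (z1 := vadd y (vscal (k I1) (ebasis I1))).
  set (z2 := vadd z1 (vscal (k I2) (ebasis I2))).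
  assert (E3 : vadd y k = vadd z2 (vscal (k I3) (ebasis I3))).
  { apply vext; intros j; destruct j; unfold z2, z1, vadd, vscal, ebasis; simpl; ring. }
  assert (S1 : Rabs (f z1 - f y - k I1 * partial I1 f y) <= e * Rabs (k I1)).
  { assert (Hy0 : y = vadd y (vscal 0 (ebasis I1))) by (apply vext; intros j; unfold vadd, vscal; ring).
    pattern y at 2. rewrite Hy0.
    replace (vadd (vadd y (vscal 0 (ebasis I1))) (vscal (k I1) (ebasis I1))) with z1
      by (apply vext; intros j; unfold z1, vadd, vscal; ring).
    assert (z1 = vadd y (vscal (k I1) (ebasis I1))) by reflexivity.
    rewrite H, <- Hy0. apply line_step with (O := O). intros; apply Hd; auto.
    intros t Ht. apply between_abs in Ht.
    assert (Hv : vsub (vadd y (vscal t (ebasis I1))) y = mkv t 0 0)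
      by (apply vext; intros j; destruct j; unfold vsub, vadd, vscal, ebasis, mkv; simpl; ring).
    assert (Hn : norm3 (vsub (vadd y (vscal t (ebasis I1))) y) <= norm3 k).
    { rewrite Hv. apply norm3_mono. intros j; destruct j; simpl; auto; rewrite Rabs_R0; apply Rabs_pos. }
    destruct (Hnear _ Hn) as [HO HP]. auto. }
  assert (S2 : Rabs (f z2 - f z1 - k I2 * partial I2 f y) <= e * Rabs (k I2)).
  { apply line_step with (O := O). intros; apply Hd; auto.
    intros t Ht. apply between_abs in Ht.
    assert (Hv : vsub (vadd z1 (vscal t (ebasis I2))) y = mkv (k I1) t 0)
      by (apply vext; intros j; destruct j; unfold z1, vsub, vadd, vscal, ebasis, mkv; simpl; ring).
    assert (Hn : norm3 (vsub (vadd z1 (vscal t (ebasis I2))) y) <= norm3 k).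
    { rewrite Hv. apply norm3_mono. intros j; destruct j; simpl; auto. apply Rle_refl. rewrite Rabs_R0; apply Rabs_pos. }
    destruct (Hnear _ Hn) as [HO HP]. auto. }
  assert (S3 : Rabs (f (vadd z2 (vscal (k I3) (ebasis I3))) - f z2 - k I3 * partial I3 f y) <= e * Rabs (k I3)).
  { apply line_step with (O := O). intros; apply Hd; auto.
    intros t Ht. apply between_abs in Ht.
    assert (Hv : vsub (vadd z2 (vscal t (ebasis I3))) y = mkv (k I1) (k I2) t)
      by (apply vext; intros j; destruct j; unfold z2, z1, vsub, vadd, vscal, ebasis, mkv; simpl; ring).
    assert (Hn : norm3 (vsub (vadd z2 (vscal t (ebasis I3))) y) <= norm3 k).
    { rewrite Hv. apply norm3_mono. intros j; destruct j; simpl; auto; apply Rle_refl. }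
    destruct (Hnear _ Hn) as [HO HP]. auto. }
  rewrite E3.
  replace (f (vadd z2 (vscal (k I3) (ebasis I3))) - f y - sum3 (fun j => k j * partial j f y))
    with ((f z1 - f y - k I1 * partial I1 f y) + (f z2 - f z1 - k I2 * partial I2 f y)
          + (f (vadd z2 (vscal (k I3) (ebasis I3))) - f z2 - k I3 * partial I3 f y))
    by (unfold sum3; ring).
  eapply Rle_trans. apply Rabs_triang3. lra.
Qed.

Lemma chain_rule (O : vec3 -> Prop) f (g : R -> vec3) dg t :
  open3 O ->
  (forall i w, O w -> ex_derive (fun t => f (vadd w (vscal t (ebasis i)))) 0) ->
  (forall i, cont_on O (partial i f)) -> O (g t) ->
  (forall i, is_derive (fun s => g s i) t (dg i)) ->
  is_derive (fun s => f (g s)) t (sum3 (fun j => dg j * partial j f (g t))).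
Proof.
  intros Hop Hd Hc Hy Hg.
  apply is_derive_Reals. intros eps Heps.
  set (y := g t). set (P := Rabs (partial I1 f y) + Rabs (partial I2 f y) + Rabs (partial I3 f y)).
  set (M := Rabs (dg I1) + Rabs (dg I2) + Rabs (dg I3)).
  assert (HP : 0 <= P) by (unfold P; pose proof (Rabs_pos (partial I1 f y)); pose proof (Rabs_pos (partial I2 f y)); pose proof (Rabs_pos (partial I3 f y)); lra).
  assert (HM : 0 <= M) by (unfold M; pose proof (Rabs_pos (dg I1)); pose proof (Rabs_pos (dg I2)); pose proof (Rabs_pos (dg I3)); lra).
  set (e1 := eps / (2 * (M + 3))).
  assert (He1 : 0 < e1) by (unfold e1; apply Rdiv_lt_0_compat; lra).
  destruct (frechet O f y Hop Hd Hc Hy e1 He1) as [dF [HdF HF]].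
  set (eta := Rmin 1 (eps / (2 * (P + 1)))).
  assert (Heta : 0 < eta) by (unfold eta; apply Rmin_pos; [lra | apply Rdiv_lt_0_compat; lra]).
  assert (Heta1 : eta <= 1) by apply Rmin_l.
  assert (Heta2 : eta <= eps / (2 * (P + 1))) by apply Rmin_r.
  assert (Hgi : forall i, exists d : posreal, forall h, h <> 0 -> Rabs h < d ->
     Rabs ((g (t + h) i - g t i) / h - dg i) < eta).
  { intros i. pose proof (Hg i) as Hi. apply is_derive_Reals in Hi. apply (Hi eta Heta). }
  destruct (Hgi I1) as [d1 H1]. destruct (Hgi I2) as [d2 H2]. destruct (Hgi I3) as [d3 H3].
  assert (Hd0 : 0 < dF / (3 * (M + 1))) by (apply Rdiv_lt_0_compat; lra).
  exists (mkposreal _ (Rmin_pos _ _ (Rmin_pos _ _ (cond_pos d1) (cond_pos d2))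
                        (Rmin_pos _ _ (cond_pos d3) Hd0))).
  intros h Hh0 Hh. simpl in Hh.
  assert (Hh1 : Rabs h < d1) by (eapply Rlt_le_trans; [exact Hh|]; eapply Rle_trans; [apply Rmin_l|apply Rmin_l]).
  assert (Hh2 : Rabs h < d2) by (eapply Rlt_le_trans; [exact Hh|]; eapply Rle_trans; [apply Rmin_l|apply Rmin_r]).
  assert (Hh3 : Rabs h < d3) by (eapply Rlt_le_trans; [exact Hh|]; eapply Rle_trans; [apply Rmin_r|apply Rmin_l]).
  assert (Hh4 : Rabs h < dF / (3 * (M + 1))) by (eapply Rlt_le_trans; [exact Hh|]; eapply Rle_trans; [apply Rmin_r|apply Rmin_r]).
  set (k := vsub (g (t + h)) y).
  set (q := fun i => k i / h).
  assert (Hq : forall i, Rabs (q i - dg i) < eta).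
  { intros i; destruct i; unfold q, k, vsub, y; [apply H1|apply H2|apply H3]; auto. }
  assert (Hhp : 0 < Rabs h) by (apply Rabs_pos_lt; auto).
  assert (Hkq : forall i, k i = q i * h) by (intros i; unfold q; field; auto).
  assert (Hqb : forall i, Rabs (q i) <= Rabs (dg i) + 1).
  { intros i. specialize (Hq i). replace (q i) with ((q i - dg i) + dg i) by ring.
    eapply Rle_trans. apply Rabs_triang. lra. }
  assert (Hkb : forall i, Rabs (k i) < dF / 3).
  { intros i. rewrite Hkq, Rabs_mult.
    assert (Rabs (dg i) <= M) by (unfold M; destruct i; pose proof (Rabs_pos (dg I1)); pose proof (Rabs_pos (dg I2)); pose proof (Rabs_pos (dg I3)); lra).
    assert (Hx : Rabs (q i) * Rabs h <= (M + 1) * Rabs h) by (apply Rmult_le_compat_r; [apply Rabs_pos|specialize (Hqb i); lra]).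
    assert ((M + 1) * Rabs h < (M+1) * (dF / (3 * (M + 1)))) by (apply Rmult_lt_compat_l; lra).
    replace ((M+1) * (dF / (3 * (M + 1)))) with (dF / 3) in H0 by (field; lra). lra. }
  assert (Hkn : norm3 k < dF) by (apply norm3_small; auto).
  specialize (HF k Hkn).
  assert (Egk : vadd y k = g (t + h)) by (apply vext; intros i; unfold k, vadd, vsub; ring).
  rewrite Egk in HF.
  set (E := f (g (t + h)) - f y - sum3 (fun j => k j * partial j f y)) in *.
  assert (Eq : (f (g (t + h)) - f (g t)) / h - sum3 (fun j => dg j * partial j f (g t))
     = E / h + ((q I1 - dg I1) * partial I1 f y + (q I2 - dg I2) * partial I2 f y + (q I3 - dg I3) * partial I3 f y)).
  { unfold E, sum3. fold y. rewrite !Hkq. field. auto. }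
  simpl. fold y. fold y in Eq. rewrite Eq.
  assert (B1 : Rabs (E / h) <= eps / 2).
  { rewrite Rabs_div by auto. apply Rle_div_l. auto.
    eapply Rle_trans. exact HF. rewrite !Hkq, !Rabs_mult.
    assert (Hs : Rabs (q I1) + Rabs (q I2) + Rabs (q I3) <= M + 3)
      by (unfold M; pose proof (Hqb I1); pose proof (Hqb I2); pose proof (Hqb I3); lra).
    replace (e1 * (Rabs (q I1) * Rabs h + Rabs (q I2) * Rabs h + Rabs (q I3) * Rabs h))
      with ((e1 * (Rabs (q I1) + Rabs (q I2) + Rabs (q I3))) * Rabs h) by ring.
    apply Rmult_le_compat_r. lra.
    replace (eps / 2) with (e1 * (M + 3)) by (unfold e1; field; lra).
    apply Rmult_le_compat_l; lra. }
  assert (B2 : Rabs ((q I1 - dg I1) * partial I1 f y + (q I2 - dg I2) * partial I2 f y + (q I3 - dg I3) * partial I3 f y) < eps / 2).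
  { eapply Rle_lt_trans. apply Rabs_triang3. rewrite !Rabs_mult.
    assert (forall i, Rabs (q i - dg i) * Rabs (partial i f y) <= eta * Rabs (partial i f y)).
    { intros i. apply Rmult_le_compat_r. apply Rabs_pos. left; auto. }
    pose proof (H I1); pose proof (H I2); pose proof (H I3).
    assert (eta * P <= eps / (2 * (P + 1)) * P) by (apply Rmult_le_compat_r; auto).
    assert (eps / (2 * (P + 1)) * P < eps / 2).
    { replace (eps / (2 * (P + 1)) * P) with (eps / 2 * (P / (P + 1))) by (field; lra).
      rewrite <- (Rmult_1_r (eps / 2)) at 2. apply Rmult_lt_compat_l. lra.
      unfold Rdiv; apply (Rmult_lt_reg_r (P+1)); [lra|]; rewrite Rmult_assoc, Rinv_l by lra; lra. }
    assert (eta * P = eta * Rabs (partial I1 f y) + eta * Rabs (partial I2 f y) + eta * Rabs (partial I3 f y)) by (unfold P; ring).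
    lra. }
  eapply Rle_lt_trans. apply Rabs_triang. lra.
Qed.

Lemma C1_of_Ck1 (O : vec3 -> Prop) f : open3 O -> Ck 1 O f -> C1v O f (fun j => partial j f).
Proof.
  intros Hop [Hc Hi]. split; [auto|split].
  - intros j. apply (Hi j).
  - intros g dg t Hy Hg. apply chain_rule with (O := O); auto.
    intros i w Hw. apply (Hi i); auto. intros i; apply (Hi i).
Qed.

Lemma prod_close x0 y0 e : 0 < e -> exists eta, 0 < eta /\ forall x y,
  Rabs (x - x0) < eta -> Rabs (y - y0) < eta -> Rabs (x * y - x0 * y0) < e.
Proof.
  intros He. set (S := Rabs x0 + Rabs y0 + 1).
  assert (HS : 1 <= S) by (unfold S; pose proof (Rabs_pos x0); pose proof (Rabs_pos y0); lra).
  exists (Rmin 1 (e / S)). split. apply Rmin_pos. lra. apply Rdiv_lt_0_compat; lra.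
  intros x y Hx Hy.
  assert (Hm1 : Rmin 1 (e / S) <= 1) by apply Rmin_l.
  assert (Hm2 : Rmin 1 (e / S) <= e / S) by apply Rmin_r.
  set (m := Rmin 1 (e / S)) in *.
  replace (x * y - x0 * y0) with ((x - x0) * (y - y0) + x0 * (y - y0) + (x - x0) * y0) by ring.
  eapply Rle_lt_trans. apply Rabs_triang3. rewrite !Rabs_mult.
  pose proof (Rabs_pos (x - x0)); pose proof (Rabs_pos (y - y0)); pose proof (Rabs_pos x0); pose proof (Rabs_pos y0).
  assert (Rabs (x - x0) * Rabs (y - y0) <= m * m) by (apply Rmult_le_compat; lra).
  assert (Rabs x0 * Rabs (y - y0) <= Rabs x0 * m) by (apply Rmult_le_compat_l; lra).
  assert (Rabs (x - x0) * Rabs y0 <= m * Rabs y0) by (apply Rmult_le_compat_r; lra).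
  assert (m * S <= e) by (apply (Rmult_le_reg_r (/ S)); [apply Rinv_0_lt_compat; lra|];
     replace (e * / S) with (e / S) by reflexivity; rewrite Rmult_assoc, Rinv_r by lra; lra).
  assert (m > 0) by (unfold m; apply Rmin_pos; [lra|apply Rdiv_lt_0_compat; lra]).
  assert (m * m <= m) by nra.
  assert (Rabs (x - x0) * Rabs (y - y0) < m * m) .
  { destruct (Rle_lt_dec (Rabs (x - x0)) 0).
    - assert (Rabs (x - x0) = 0) by lra. rewrite H9. nra.
    - apply Rle_lt_trans with (Rabs (x - x0) * m). apply Rmult_le_compat_l; lra.
      apply Rmult_lt_compat_r; lra. }
  unfold S in *. nra.
Qed.

Lemma cont_pt_plus f g y : cont_pt f y -> cont_pt g y -> cont_pt (fun z => f z + g z) y.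
Proof.
  intros Hf Hg e He. destruct (Hf (e/2)) as [d1 [Hd1 H1]]. lra.
  destruct (Hg (e/2)) as [d2 [Hd2 H2]]. lra.
  exists (Rmin d1 d2). split. apply Rmin_pos; auto. intros z Hz.
  assert (norm3 (vsub z y) < d1) by (eapply Rlt_le_trans; [exact Hz|apply Rmin_l]).
  assert (norm3 (vsub z y) < d2) by (eapply Rlt_le_trans; [exact Hz|apply Rmin_r]).
  specialize (H1 z H). specialize (H2 z H0).
  replace (f z + g z - (f y + g y)) with ((f z - f y) + (g z - g y)) by ring.
  eapply Rle_lt_trans. apply Rabs_triang. lra.
Qed.

Lemma cont_pt_mult f g y : cont_pt f y -> cont_pt g y -> cont_pt (fun z => f z * g z) y.
Proof.
  intros Hf Hg e He. destruct (prod_close (f y) (g y) e He) as [eta [Heta H]].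
  destruct (Hf eta Heta) as [d1 [Hd1 H1]].
  destruct (Hg eta Heta) as [d2 [Hd2 H2]].
  exists (Rmin d1 d2). split. apply Rmin_pos; auto. intros z Hz.
  apply H. apply H1. eapply Rlt_le_trans; [exact Hz|apply Rmin_l].
  apply H2. eapply Rlt_le_trans; [exact Hz|apply Rmin_r].
Qed.

Lemma cont_pt_const c y : cont_pt (fun _ => c) y.
Proof. intros e He. exists 1. split. lra. intros. rewrite Rminus_eq_0, Rabs_R0. auto. Qed.

Lemma cont_pt_coord i y : cont_pt (fun z => z i) y.
Proof.
  intros e He. exists e. split. auto. intros z Hz.
  eapply Rle_lt_trans. 2: exact Hz. apply (norm3_comp (vsub z y) i).
Qed.

Lemma C1_plus O f g Df Dg : C1v O f Df -> C1v O g Dg ->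
  C1v O (fun y => f y + g y) (fun j y => Df j y + Dg j y).
Proof.
  intros [Hf1 [Hf2 Hf3]] [Hg1 [Hg2 Hg3]]. split; [|split].
  - intros y Hy. apply cont_pt_plus; [exact (Hf1 y Hy)|exact (Hg1 y Hy)].
  - intros j y Hy. apply cont_pt_plus; [exact (Hf2 j y Hy)|exact (Hg2 j y Hy)].
  - intros g0 dg t Ht Hd. eapply is_derive_eq.
    apply (is_derive_plus (fun s => f (g0 s)) (fun s => g (g0 s))); [apply Hf3|apply Hg3]; auto.
    rewrite plusRE. Req. unfold sum3. ring.
Qed.

Lemma C1_mult O f g Df Dg : C1v O f Df -> C1v O g Dg ->
  C1v O (fun y => f y * g y) (fun j y => Df j y * g y + f y * Dg j y).
Proof.
  intros [Hf1 [Hf2 Hf3]] [Hg1 [Hg2 Hg3]]. split; [|split].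
  - intros y Hy. apply cont_pt_mult; [exact (Hf1 y Hy)|exact (Hg1 y Hy)].
  - intros j y Hy. apply cont_pt_plus; apply cont_pt_mult;
      first [exact (Hf1 y Hy)|exact (Hg1 y Hy)|exact (Hf2 j y Hy)|exact (Hg2 j y Hy)].
  - intros g0 dg t Ht Hd. eapply is_derive_eq.
    apply (is_derive_mult (fun s => f (g0 s)) (fun s => g (g0 s))); [apply Hf3|apply Hg3|]; auto.
    intros; apply Rmult_comm.
    rewrite plusRE, !multRE. Req. unfold sum3. ring.
Qed.

Lemma C1_const O c : C1v O (fun _ => c) (fun _ _ => 0).
Proof.
  split; [|split].
  - intros y Hy; apply cont_pt_const.
  - intros j y Hy; apply cont_pt_const.
  - intros g0 dg t Ht Hd. eapply is_derive_eq. apply is_derive_const. Req. unfold sum3. simpl. ring.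
Qed.

Lemma C1_coord O i : C1v O (fun y => y i) (fun j _ => ebasis j i).
Proof.
  split; [|split].
  - intros y Hy; apply cont_pt_coord.
  - intros j y Hy; apply cont_pt_const.
  - intros g0 dg t Ht Hd. eapply is_derive_eq. apply Hd.
    Req. destruct i; unfold sum3, ebasis; simpl; ring.
Qed.

Lemma C1_partial O f Df j y : O y -> C1v O f Df -> partial j f y = Df j y.
Proof.
  intros Hy [_ [_ H]].
  set (g := fun s => vadd y (vscal s (ebasis j))).
  assert (Hg0 : g 0 = y) by (apply vext; intros i; unfold g, vadd, vscal; ring).
  assert (Hd : forall i, is_derive (fun s => g s i) 0 (ebasis j i)).
  { intros i. unfold g, vadd, vscal. auto_derive; auto. ring. }
  specialize (H g (ebasis j) 0). rewrite Hg0 in H. specialize (H Hy Hd).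
  unfold partial. etransitivity. apply (is_derive_unique (fun s => f (g s)) 0). exact H.
  destruct j; unfold sum3, ebasis; simpl; ring.
Qed.

Lemma C1_ext O f g Df Dg : C1v O f Df -> (forall y, f y = g y) -> (forall j y, O y -> Df j y = Dg j y) ->
  open3 O -> C1v O g Dg.
Proof.
  intros [H1 [H2 H3]] Hfg HD Hop.
  assert (Ef : f = g) by (apply functional_extensionality; auto). subst g.
  split; [auto|split].
  - intros j y Hy e He. destruct (H2 j y Hy e He) as [d [Hd Hz]].
    destruct (Hop y Hy) as [d' [Hd' Hb]].
    exists (Rmin d d'). split. apply Rmin_pos; auto. intros z Hz'.
    rewrite <- !HD; auto. apply Hz. eapply Rlt_le_trans; [exact Hz'|apply Rmin_l].
    apply Hb. eapply Rlt_le_trans; [exact Hz'|apply Rmin_r].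
  - intros g0 dg t Ht Hd. eapply is_derive_eq. apply H3; auto.
    unfold sum3. rewrite !HD; auto.
Qed.


Definition c1 (f : R -> R) a := forall e, 0 < e -> exists d, 0 < d /\
  forall a', Rabs (a' - a) < d -> Rabs (f a' - f a) < e.
Definition c2 (f : R -> R -> R) a b := forall e, 0 < e -> exists d, 0 < d /\
  forall a' b', Rabs (a' - a) < d -> Rabs (b' - b) < d -> Rabs (f a' b' - f a b) < e.
Definition c3 (f : R -> R -> R -> R) a b c := forall e, 0 < e -> exists d, 0 < d /\
  forall a' b' c', Rabs (a' - a) < d -> Rabs (b' - b) < d -> Rabs (c' - c) < d ->
    Rabs (f a' b' c' - f a b c) < e.

Lemma cont_c1 f x : continuous f x -> c1 f x.
Proof.
  intros H e He. apply filterlim_locally with (eps := mkposreal e He) in H.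
  destruct H as [d Hd]. exists d. split. apply cond_pos. intros a' Ha'. apply (Hd a' Ha').
Qed.

Lemma c1_cont f x : c1 f x -> continuous f x.
Proof.
  intros H. apply filterlim_locally. intros eps.
  destruct (H eps (cond_pos eps)) as [d [Hd H']]. exists (mkposreal d Hd).
  intros y Hy. apply H'. apply Hy.
Qed.

Lemma min3_pos a b c : 0 < a -> 0 < b -> 0 < c -> 0 < Rmin a (Rmin b c).
Proof. intros; repeat apply Rmin_pos; auto. Qed.

Ltac minlt H := eapply Rlt_le_trans; [exact H| repeat (first [apply Rle_refl | apply Rmin_l | eapply Rle_trans; [apply Rmin_r|]])].

Lemma c3_plus f g a b c : c3 f a b c -> c3 g a b c -> c3 (fun x y z => f x y z + g x y z) a b c.
Proof.
  intros Hf Hg e He. destruct (Hf (e/2)) as [d1 [Hd1 H1]]. lra.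
  destruct (Hg (e/2)) as [d2 [Hd2 H2]]. lra.
  exists (Rmin d1 d2). split. apply Rmin_pos; auto. intros a' b' c' Ha Hb Hc.
  assert (A1 := H1 a' b' c'). assert (A2 := H2 a' b' c').
  replace (f a' b' c' + g a' b' c' - (f a b c + g a b c)) with ((f a' b' c' - f a b c) + (g a' b' c' - g a b c)) by ring.
  eapply Rle_lt_trans. apply Rabs_triang.
  assert (Rabs (f a' b' c' - f a b c) < e/2) by (apply A1; eapply Rlt_le_trans; eauto; apply Rmin_l).
  assert (Rabs (g a' b' c' - g a b c) < e/2) by (apply A2; eapply Rlt_le_trans; eauto; apply Rmin_r).
  lra.
Qed.

Lemma c3_mult f g a b c : c3 f a b c -> c3 g a b c -> c3 (fun x y z => f x y z * g x y z) a b c.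
Proof.
  intros Hf Hg e He. destruct (prod_close (f a b c) (g a b c) e He) as [eta [Heta H]].
  destruct (Hf eta Heta) as [d1 [Hd1 H1]]. destruct (Hg eta Heta) as [d2 [Hd2 H2]].
  exists (Rmin d1 d2). split. apply Rmin_pos; auto. intros a' b' c' Ha Hb Hc.
  apply H; [apply H1|apply H2]; eapply Rlt_le_trans; eauto; first [apply Rmin_l|apply Rmin_r].
Qed.

Lemma c3_const k a b c : c3 (fun _ _ _ => k) a b c.
Proof. intros e He. exists 1. split. lra. intros. rewrite Rminus_eq_0, Rabs_R0. auto. Qed.
Lemma c3_p1 a b c : c3 (fun x _ _ => x) a b c.
Proof. intros e He. exists e. split. auto. intros; auto. Qed.
Lemma c3_p2 a b c : c3 (fun _ y _ => y) a b c.
Proof. intros e He. exists e. split. auto. intros; auto. Qed.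
Lemma c3_p3 a b c : c3 (fun _ _ z => z) a b c.
Proof. intros e He. exists e. split. auto. intros; auto. Qed.

Lemma c3_comp1 (h : R -> R) f a b c : (forall x, continuous h x) -> c3 f a b c ->
  c3 (fun x y z => h (f x y z)) a b c.
Proof.
  intros Hh Hf e He. destruct (cont_c1 h (f a b c) (Hh _) e He) as [d1 [Hd1 H1]].
  destruct (Hf d1 Hd1) as [d [Hd H]]. exists d. split; [auto|]. intros. apply H1. apply H; auto.
Qed.

Lemma c3_sin f a b c : c3 f a b c -> c3 (fun x y z => sin (f x y z)) a b c.
Proof. apply c3_comp1. apply continuous_sin. Qed.
Lemma c3_cos f a b c : c3 f a b c -> c3 (fun x y z => cos (f x y z)) a b c.
Proof. apply c3_comp1. apply continuous_cos. Qed.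

Lemma c3_opp f a b c : c3 f a b c -> c3 (fun x y z => - f x y z) a b c.
Proof.
  intros H. apply (c3_mult (fun _ _ _ => -1) f) in H; [|apply c3_const].
  intros e He. destruct (H e He) as [d [Hd H']]. exists d. split; auto. intros.
  replace (- f a' b' c' - - f a b c) with (-1 * f a' b' c' - -1 * f a b c) by ring. auto.
Qed.

Lemma c3_minus f g a b c : c3 f a b c -> c3 g a b c -> c3 (fun x y z => f x y z - g x y z) a b c.
Proof. intros Hf Hg. apply (c3_plus f (fun x y z => - g x y z)); auto. apply c3_opp; auto. Qed.

Lemma c3_vcomp (M : R -> R -> R -> vec3) (g : vec3 -> R) a b c :
  (forall i, c3 (fun x y z => M x y z i) a b c) -> cont_pt g (M a b c) ->
  c3 (fun x y z => g (M x y z)) a b c.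
Proof.
  intros HM Hg e He. destruct (Hg e He) as [d0 [Hd0 H0]].
  destruct (HM I1 (d0/3)) as [d1 [Hd1 H1]]. lra.
  destruct (HM I2 (d0/3)) as [d2 [Hd2 H2]]. lra.
  destruct (HM I3 (d0/3)) as [d3 [Hd3 H3]]. lra.
  exists (Rmin d1 (Rmin d2 d3)). split. apply min3_pos; auto.
  intros a' b' c' Ha Hb Hc. apply H0. apply norm3_small. intros i; destruct i; unfold vsub.
  - apply H1; minlt Ha || minlt Hb || minlt Hc.
  - apply H2; first [minlt Ha | minlt Hb | minlt Hc].
  - apply H3; first [minlt Ha | minlt Hb | minlt Hc].
Qed.

Lemma c3_c1_t J u v t : c3 J u v t -> c1 (J u v) t.
Proof.
  intros H e He. destruct (H e He) as [d [Hd H']]. exists d. split; [auto|]. intros.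
  apply H'; auto; rewrite Rminus_eq_0, Rabs_R0; auto.
Qed.

Lemma ex_RInt_c3 J u v a b : (forall t, c3 J u v t) -> ex_RInt (J u v) a b.
Proof. intros H. apply (ex_RInt_continuous (V:=R_CompleteNormedModule)). intros. apply c1_cont, c3_c1_t, H. Qed.

Lemma L1 (J : R -> R -> R -> R) R0 a b : a <= b ->
  (forall u v t, Rabs u < R0 -> c3 J u v t) ->
  forall u v, Rabs u < R0 -> c2 (fun u v => RInt (J u v) a b) u v.
Proof.
  intros Hab HJ u v Hu e He.
  set (e' := e / (b - a + 1)).
  assert (He' : 0 < e') by (unfold e'; apply Rdiv_lt_0_compat; lra).
  assert (Hex : forall t, exists d, 0 < d /\ forall a' b' c', Rabs (a' - u) < d -> Rabs (b' - v) < d -> Rabs (c' - t) < d ->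
     Rabs (J a' b' c' - J u v t) < e' / 2).
  { intros t. apply (HJ u v t Hu). lra. }
  set (dl := fun t => proj1_sig (constructive_indefinite_description _ (Hex t))).
  assert (Hdl : forall t, 0 < dl t /\ forall a' b' c', Rabs (a' - u) < dl t -> Rabs (b' - v) < dl t -> Rabs (c' - t) < dl t ->
     Rabs (J a' b' c' - J u v t) < e' / 2).
  { intros t. unfold dl. destruct (constructive_indefinite_description _ (Hex t)) as [x Hx]. simpl. auto. }
  set (delta := fun t => mkposreal (dl t) (proj1 (Hdl t))).
  destruct (compactness_value_1d a b delta) as [d0 Hd0].
  assert (HR : 0 < R0 - Rabs u) by lra.
  exists (Rmin d0 (R0 - Rabs u)). split. apply Rmin_pos. apply cond_pos. auto.
  intros u' v' Hu' Hv'.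
  assert (Hu'1 : Rabs (u' - u) < d0) by (eapply Rlt_le_trans; [exact Hu'|apply Rmin_l]).
  assert (Hv'1 : Rabs (v' - v) < d0) by (eapply Rlt_le_trans; [exact Hv'|apply Rmin_l]).
  assert (HuR : Rabs u' < R0).
  { assert (Rabs (u' - u) < R0 - Rabs u) by (eapply Rlt_le_trans; [exact Hu'|apply Rmin_r]).
    replace u' with ((u' - u) + u) by ring. eapply Rle_lt_trans. apply Rabs_triang. lra. }
  assert (Hpt : forall t', a <= t' <= b -> Rabs (J u' v' t' - J u v t') < e').
  { intros t' Ht'. apply NNPP. intro Hcon. apply (Hd0 t' Ht'). intros [t [Ht [H1 H2]]].
    apply Hcon. simpl in H1, H2.
    destruct (Hdl t) as [_ Hq].
    assert (A1 : Rabs (J u' v' t' - J u v t) < e' / 2) by (apply Hq; lra).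
    assert (A2 : Rabs (J u v t' - J u v t) < e' / 2).
    { apply Hq; try (rewrite Rminus_eq_0, Rabs_R0; apply (proj1 (Hdl t))). lra. }
    replace (J u' v' t' - J u v t') with ((J u' v' t' - J u v t) - (J u v t' - J u v t)) by ring.
    eapply Rle_lt_trans. apply Rabs_triang. rewrite Rabs_Ropp. lra. }
  assert (E1 : ex_RInt (J u' v') a b) by (apply ex_RInt_c3; intros; apply HJ; auto).
  assert (E2 : ex_RInt (J u v) a b) by (apply ex_RInt_c3; intros; apply HJ; auto).
  simpl. replace (RInt (J u' v') a b - RInt (J u v) a b) with (RInt (fun t => J u' v' t - J u v t) a b)
    by (exact (RInt_minus (J u' v') (J u v) a b E1 E2)).
  eapply Rle_lt_trans. apply abs_RInt_le_const with (M := e'). auto.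
  exact (ex_RInt_minus (J u' v') (J u v) a b E1 E2).
  intros t Ht. left. apply Hpt; auto.
  unfold e'. apply (Rmult_lt_reg_r (b - a + 1)). lra.
  replace ((b - a) * (e / (b - a + 1)) * (b - a + 1)) with ((b - a) * e) by (field; lra).
  nra.
Qed.

Lemma D1 (J Jd : R -> R -> R) a b s0 eta : a <= b -> 0 < eta ->
  (forall s t, Rabs (s - s0) < eta -> is_derive (fun z => J z t) s (Jd s t)) ->
  (forall s t, Rabs (s - s0) < eta -> c2 Jd s t) ->
  (forall s t, Rabs (s - s0) < eta -> c2 J s t) ->
  is_derive (fun s => RInt (J s) a b) s0 (RInt (Jd s0) a b).
Proof.
  intros Hab Heta HD HcD HcJ.
  assert (Hs0 : Rabs (s0 - s0) < eta) by (rewrite Rminus_eq_0, Rabs_R0; auto).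
  assert (E : RInt (Jd s0) a b = RInt (fun t => Derive (fun u => J u t) s0) a b).
  { apply RInt_ext. intros x _. symmetry. apply is_derive_unique. apply HD; auto. }
  rewrite E.
  apply (is_derive_RInt_param (fun u t => J u t)).
  - exists (mkposreal eta Heta). intros y Hy t _. eexists. apply HD. apply Hy.
  - intros t _ eps. destruct (HcD s0 t Hs0 eps (cond_pos eps)) as [d [Hd H]].
    exists (mkposreal (Rmin d eta) (Rmin_pos _ _ Hd Heta)). simpl. intros u v Hu Hv. cbv beta.
    replace (Derive (fun z : R => J z v) u) with (Jd u v)
      by (symmetry; apply is_derive_unique; apply HD; eapply Rlt_le_trans; [exact Hu|apply Rmin_r]).
    replace (Derive (fun z : R => J z t) s0) with (Jd s0 t)
      by (symmetry; apply is_derive_unique; apply HD; auto).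
    apply H; eapply Rlt_le_trans; eauto; apply Rmin_l.
  - exists (mkposreal eta Heta). intros y Hy. apply (ex_RInt_continuous (V:=R_CompleteNormedModule)).
    intros z _. apply c1_cont. intros e He. destruct (HcJ y z Hy e He) as [d [Hd H]].
    exists d. split; [auto|]. intros a' Ha'. apply H; auto. rewrite Rminus_eq_0, Rabs_R0; auto.
Qed.

Definition Aint (K : R -> R -> R -> R) (rho : R) : R :=
  RInt (fun phi => RInt (fun theta => K rho phi theta) 0 PI) 0 (2 * PI).

Lemma c3_of_c2 (f : R -> R -> R) u v t : c2 f u t -> c3 (fun x _ z => f x z) u v t.
Proof.
  intros H e He. destruct (H e He) as [d [Hd H']]. exists d. split; [auto|]. intros. apply H'; auto.
Qed.

Lemma c2_of_c3 (K : R -> R -> R -> R) u v t : c3 K u v t -> c2 (fun x z => K x v z) u t.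
Proof.
  intros H e He. destruct (H e He) as [d [Hd H']]. exists d. split; [auto|]. intros. apply H'; auto.
  rewrite Rminus_eq_0, Rabs_R0; auto.
Qed.

Lemma c2_c1 (f : R -> R -> R) u v : c2 f u v -> c1 (f u) v.
Proof.
  intros H e He. destruct (H e He) as [d [Hd H']]. exists d. split; [auto|]. intros. apply H'; auto.
  rewrite Rminus_eq_0, Rabs_R0; auto.
Qed.

Lemma c2_c1' (f : R -> R -> R) u v : c2 f u v -> c1 (fun x => f x v) u.
Proof.
  intros H e He. destruct (H e He) as [d [Hd H']]. exists d. split; [auto|]. intros. apply H'; auto.
  rewrite Rminus_eq_0, Rabs_R0; auto.
Qed.

Section Avg.
Variable R0 : R.

Definition regular (K : R -> R -> R -> R) := forall u v t, Rabs u < R0 -> c3 K u v t.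

Lemma PI_pos' : 0 <= PI. Proof. pose proof PI_RGT_0; lra. Qed.
Lemma twoPI_pos : 0 <= 2 * PI. Proof. pose proof PI_RGT_0; lra. Qed.

Lemma A_inner_c2 K : regular K -> forall u v, Rabs u < R0 -> c2 (fun u v => RInt (K u v) 0 PI) u v.
Proof. intros H. apply L1. apply PI_pos'. auto. Qed.

Lemma A_inner_ex K rho phi : regular K -> Rabs rho < R0 -> ex_RInt (K rho phi) 0 PI.
Proof. intros H Hr. apply ex_RInt_c3. intros; apply H; auto. Qed.

Lemma A_outer_ex K rho : regular K -> Rabs rho < R0 -> ex_RInt (fun phi => RInt (K rho phi) 0 PI) 0 (2 * PI).
Proof.
  intros H Hr. apply (ex_RInt_continuous (V:=R_CompleteNormedModule)). intros z _.
  apply c1_cont. apply (c2_c1 (fun u v => RInt (K u v) 0 PI)). apply A_inner_c2; auto.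
Qed.

Lemma A_c1 K rho : regular K -> Rabs rho < R0 -> c1 (Aint K) rho.
Proof.
  intros H Hr. unfold Aint.
  assert (H2 := L1 (fun x _ z => RInt (K x z) 0 PI) R0 0 (2 * PI) twoPI_pos).
  assert (H3 : c2 (fun u v => RInt (fun phi => RInt (K u phi) 0 PI) 0 (2 * PI)) rho 0).
  { apply H2; auto. intros u v t Hu. apply c3_of_c2. apply A_inner_c2; auto. }
  apply (c2_c1' _ _ _ H3).
Qed.

Lemma A_plus K1 K2 rho : regular K1 -> regular K2 -> Rabs rho < R0 ->
  Aint (fun r p t => K1 r p t + K2 r p t) rho = Aint K1 rho + Aint K2 rho.
Proof.
  intros H1 H2 Hr. unfold Aint.
  rewrite <- (RInt_plus (V:=R_CompleteNormedModule)); try (apply A_outer_ex; auto).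
  apply RInt_ext. intros x _. apply (RInt_plus (V:=R_CompleteNormedModule)); apply A_inner_ex; auto.
Qed.

Lemma A_scal K c rho : regular K -> Rabs rho < R0 ->
  Aint (fun r p t => c * K r p t) rho = c * Aint K rho.
Proof.
  intros H Hr. unfold Aint.
  rewrite <- (RInt_scal (V:=R_CompleteNormedModule)); try (apply A_outer_ex; auto).
  apply RInt_ext. intros x _. apply (RInt_scal (V:=R_CompleteNormedModule)); apply A_inner_ex; auto.
Qed.

Lemma A_deriv K Kd rho : regular K -> regular Kd -> Rabs rho < R0 ->
  (forall r p t, Rabs r < R0 -> is_derive (fun z => K z p t) r (Kd r p t)) ->
  is_derive (Aint K) rho (Aint Kd rho).
Proof.
  intros HK HKd Hr HD. unfold Aint.
  assert (Heta : 0 < R0 - Rabs rho) by lra.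
  assert (Hin : forall s, Rabs (s - rho) < R0 - Rabs rho -> Rabs s < R0).
  { intros s Hs. replace s with ((s - rho) + rho) by ring. eapply Rle_lt_trans. apply Rabs_triang. lra. }
  apply (D1 (fun s phi => RInt (K s phi) 0 PI) (fun s phi => RInt (Kd s phi) 0 PI) 0 (2 * PI) rho (R0 - Rabs rho)
    twoPI_pos Heta).
  - intros s t Hs. assert (Hs' : Rabs s < R0) by auto.
    assert (Heta' : 0 < R0 - Rabs s) by lra.
    apply (D1 (fun z th => K z t th) (fun z th => Kd z t th) 0 PI s (R0 - Rabs s) PI_pos' Heta').
    + intros s' t' Hs''. apply HD. replace s' with ((s' - s) + s) by ring. eapply Rle_lt_trans. apply Rabs_triang. lra.
    + intros s' t' Hs''. apply c2_of_c3. apply HKd. replace s' with ((s' - s) + s) by ring. eapply Rle_lt_trans. apply Rabs_triang. lra.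
    + intros s' t' Hs''. apply c2_of_c3. apply HK. replace s' with ((s' - s) + s) by ring. eapply Rle_lt_trans. apply Rabs_triang. lra.
  - intros s t Hs. apply A_inner_c2; auto.
  - intros s t Hs. apply A_inner_c2; auto.
Qed.

End Avg.


Definition Y (c : vec3) (r phi theta : R) : vec3 := vadd c (vscal r (sph theta phi)).
Definition eth theta phi : vec3 := mkv (cos theta * cos phi) (cos theta * sin phi) (- sin theta).
Definition eph (theta phi : R) : vec3 := mkv (- sin phi) (cos phi) 0.
Definition deph (theta phi : R) : vec3 := mkv (- cos phi) (- sin phi) 0.

Lemma norm_sph theta phi : norm3 (sph theta phi) = 1.
Proof.
  unfold norm3, dot, sum3, sph. simpl.
  replace (sin theta * cos phi * (sin theta * cos phi) + sin theta * sin phi * (sin theta * sin phi) +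
     cos theta * cos theta) with 1. apply sqrt_1.
  pose proof (sin2_cos2 theta). pose proof (sin2_cos2 phi). unfold Rsqr in *. nra.
Qed.

Lemma Y_in c r phi theta R0 : Rabs r < R0 -> norm3 (vsub (Y c r phi theta) c) < R0.
Proof.
  intros H. replace (vsub (Y c r phi theta) c) with (vscal r (sph theta phi)).
  rewrite norm3_scal, norm_sph. lra.
  apply vext. intros i. unfold Y, vsub, vadd, vscal. ring.
Qed.

Lemma is_derive_mult' (f g : R -> R) x a b : is_derive f x a -> is_derive g x b ->
  is_derive (fun s => f s * g s) x (a * g x + f x * b).
Proof.
  intros Hf Hg. eapply is_derive_eq. apply (is_derive_mult f g); [exact Hf|exact Hg|intros; apply Rmult_comm].
  Req. ring.
Qed.

Lemma is_derive_plus' (f g : R -> R) x a b : is_derive f x a -> is_derive g x b ->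
  is_derive (fun s => f s + g s) x (a + b).
Proof. intros Hf Hg. eapply is_derive_eq. apply (is_derive_plus f g); [exact Hf|exact Hg]. Req. ring. Qed.

Lemma is_derive_sum3 (f : idx -> R -> R) df x : (forall i, is_derive (f i) x (df i)) ->
  is_derive (fun s => sum3 (fun i => f i s)) x (sum3 df).
Proof.
  intros H. unfold sum3. apply is_derive_plus'; [apply is_derive_plus'|]; apply H.
Qed.

Lemma dY_theta c r phi theta i : is_derive (fun s => Y c r phi s i) theta (r * eth theta phi i).
Proof. destruct i; unfold Y, vadd, vscal, sph, eth, mkv; auto_derive; auto; ring. Qed.
Lemma dY_phi c r phi theta i : is_derive (fun s => Y c r s theta i) phi (r * (sin theta * eph theta phi i)).
Proof. destruct i; unfold Y, vadd, vscal, sph, eph, mkv; auto_derive; auto; ring. Qed.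
Lemma dY_r c r phi theta i : is_derive (fun s => Y c s phi theta i) r (sph theta phi i).
Proof. destruct i; unfold Y, vadd, vscal, sph; auto_derive; auto; ring. Qed.
Lemma deth_theta phi theta i : is_derive (fun s => eth s phi i) theta (- sph theta phi i).
Proof. destruct i; unfold sph, eth, mkv; auto_derive; auto; ring. Qed.
Lemma deph_phi phi theta i : is_derive (fun s => eph theta s i) phi (deph theta phi i).
Proof. destruct i; unfold deph, eph, mkv; auto_derive; auto; ring. Qed.

Ltac c3step := first [ apply c3_plus | apply c3_minus | apply c3_mult | apply c3_opp
  | apply c3_sin | apply c3_cos | apply c3_const | apply c3_p1 | apply c3_p2 | apply c3_p3
  | match goal with |- c3 (fun x y z => ?g (@?M x y z)) ?a ?b ?c => apply (c3_vcomp M g) end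
  | match goal with |- forall i : idx, _ => intros i; destruct i; cbv beta; unfold Y, vadd, vscal, vsub, mkv, sph; simpl end ].
Ltac c3auto := repeat c3step.

Lemma RInt_zero_ext (f : R -> R) a b : (forall x, f x = 0) -> RInt f a b = 0.
Proof.
  intros H. rewrite (RInt_ext f (fun _ => 0)) by auto. rewrite RInt_const. Req. ring.
Qed.

Lemma sph_2PI theta : sph theta (2 * PI) = sph theta 0.
Proof. apply vext; intros i; destruct i; unfold sph; rewrite ?cos_2PI, ?sin_2PI, ?cos_0, ?sin_0; auto. Qed.
Lemma eph_2PI theta : eph theta (2 * PI) = eph theta 0.
Proof. apply vext; intros i; destruct i; unfold eph, mkv; rewrite ?cos_2PI, ?sin_2PI, ?cos_0, ?sin_0; auto. Qed.

Section IBP.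
Variables (O : vec3 -> Prop) (c : vec3) (R0 : R) (V : idx -> vec3 -> R) (DV : idx -> idx -> vec3 -> R) (r : R).
Hypothesis Hop : open3 O.
Hypothesis Hball : forall z, norm3 (vsub z c) < R0 -> O z.
Hypothesis HV : forall i, C1v O (V i) (DV i).
Hypothesis Hr : Rabs r < R0.

Lemma HO phi theta : O (Y c r phi theta).
Proof. apply Hball. apply Y_in. auto. Qed.
Lemma cV i phi theta : cont_pt (V i) (Y c r phi theta).
Proof. exact (proj1 (HV i) _ (HO phi theta)). Qed.
Lemma cD i j phi theta : cont_pt (DV i j) (Y c r phi theta).
Proof. exact (proj1 (proj2 (HV i)) j _ (HO phi theta)). Qed.

Let F i phi theta := V i (Y c r phi theta).
Let dFt i phi theta := sum3 (fun j => (r * eth theta phi j) * DV i j (Y c r phi theta)).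
Let dFp i phi theta := sum3 (fun j => (r * (sin theta * eph theta phi j)) * DV i j (Y c r phi theta)).

Lemma HFt i phi theta : is_derive (fun s => F i phi s) theta (dFt i phi theta).
Proof.
  unfold F, dFt. apply (proj2 (proj2 (HV i)) (fun s => Y c r phi s) (fun j => r * eth theta phi j)).
  apply HO. intros j. apply dY_theta.
Qed.
Lemma HFp i phi theta : is_derive (fun s => F i s theta) phi (dFp i phi theta).
Proof.
  unfold F, dFp. apply (proj2 (proj2 (HV i)) (fun s => Y c r s theta) (fun j => r * (sin theta * eph theta phi j))).
  apply HO. intros j. apply dY_phi.
Qed.

Let P phi theta := sin theta * sum3 (fun i => eth theta phi i * F i phi theta).
Let Pt phi theta := cos theta * sum3 (fun i => eth theta phi i * F i phi theta)
   + sin theta * sum3 (fun i => - sph theta phi i * F i phi theta + eth theta phi i * dFt i phi theta).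
Let Q phi theta := sum3 (fun i => eph theta phi i * F i phi theta).
Let Qp phi theta := sum3 (fun i => deph theta phi i * F i phi theta + eph theta phi i * dFp i phi theta).

Lemma HP phi theta : is_derive (P phi) theta (Pt phi theta).
Proof.
  unfold P, Pt. apply is_derive_mult'. apply is_derive_sin.
  apply (is_derive_sum3 (fun i s => eth s phi i * F i phi s)). intros i.
  apply (is_derive_mult' (fun s => eth s phi i) (fun s => F i phi s)). apply deth_theta. apply HFt.
Qed.

Lemma HQ phi theta : is_derive (fun s => Q s theta) phi (Qp phi theta).
Proof.
  unfold Q, Qp. apply (is_derive_sum3 (fun i s => eph theta s i * F i s theta)). intros i.
  apply (is_derive_mult' (fun s => eph theta s i) (fun s => F i s theta)). apply deph_phi. apply HFp.
Qed.

Definition ibp_integrand (r' phi theta : R) :=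
  (r' * (sum3 (fun i => DV i i (Y c r' phi theta))
         - sum3 (fun i => sum3 (fun j => sph theta phi i * sph theta phi j * DV i j (Y c r' phi theta))))
   - 2 * sum3 (fun i => sph theta phi i * V i (Y c r' phi theta))) * sin theta.

Lemma Hpt phi theta : ibp_integrand r phi theta = Pt phi theta + Qp phi theta.
Proof.
  unfold ibp_integrand, Pt, Qp, dFt, dFp, F, sum3, eth, eph, deph, sph, mkv. simpl.
  pose proof (sin2_cos2 theta) as H1. pose proof (sin2_cos2 phi) as H2. unfold Rsqr in *.
  set (y := Y c r phi theta).
  set (st := sin theta) in *. set (ct := cos theta) in *. set (sp := sin phi) in *. set (cp := cos phi) in *.
  nsatz.
Qed.

Ltac cvtac := cbv beta; first [apply cV | apply cD].

Lemma c3_Pt u v t : c3 (fun x _ z => Pt x z) u v t.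
Proof. unfold Pt, dFt, F, sum3, eth, sph, mkv. simpl. c3auto; cvtac. Qed.
Lemma c3_Qp u v t : c3 (fun x _ z => Qp x z) u v t.
Proof. unfold Qp, dFp, F, sum3, eph, deph, sph, mkv. simpl. c3auto; cvtac. Qed.
Lemma c3_Q u v t : c3 (fun x _ z => Q x z) u v t.
Proof. unfold Q, F, sum3, eph, mkv. simpl. c3auto; cvtac. Qed.

Lemma sphere_ibp : Aint ibp_integrand r = 0.
Proof.
  unfold Aint.
  assert (BIG : 0 <= 2 * PI) by apply twoPI_pos.
  assert (E1 : forall phi, RInt (fun theta => ibp_integrand r phi theta) 0 PI
       = RInt (Pt phi) 0 PI + RInt (Qp phi) 0 PI).
  { intros phi. rewrite <- (RInt_plus (V:=R_CompleteNormedModule)).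
    apply RInt_ext. intros; apply Hpt.
    apply (ex_RInt_c3 (fun x _ z => Pt x z) phi 0). intros; apply c3_Pt.
    apply (ex_RInt_c3 (fun x _ z => Qp x z) phi 0). intros; apply c3_Qp. }
  assert (E2 : forall phi, RInt (Pt phi) 0 PI = 0).
  { intros phi. apply is_RInt_unique.
    replace 0 with (minus (P phi PI) (P phi 0)) at 2.
    apply (is_RInt_derive (V:=R_CompleteNormedModule)).
    intros; apply HP. intros x _. apply c1_cont. apply (c3_c1_t (fun x _ z => Pt x z) phi 0). apply c3_Pt.
    unfold P. rewrite sin_PI, sin_0. Req. ring. }
  rewrite (RInt_ext _ (fun phi => RInt (Qp phi) 0 PI)).
  2: { intros x _. rewrite E1, E2. Req. ring. }
  set (Phi := fun phi => RInt (Q phi) 0 PI).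
  assert (HPhi : forall phi, is_derive Phi phi (RInt (Qp phi) 0 PI)).
  { intros phi. apply (D1 Q Qp 0 PI phi 1 PI_pos' Rlt_0_1).
    - intros s t _. apply HQ.
    - intros s t _. apply (c2_of_c3 (fun x _ z => Qp x z) s 0 t). apply c3_Qp.
    - intros s t _. apply (c2_of_c3 (fun x _ z => Q x z) s 0 t). apply c3_Q. }
  assert (Hm : minus (Phi (2 * PI)) (Phi 0) = 0).
  { unfold Phi. rewrite (RInt_ext (Q (2 * PI)) (Q 0)). Req. ring.
    intros x _. unfold Q, F, Y. rewrite sph_2PI, eph_2PI. reflexivity. }
  apply is_RInt_unique.
  assert (HH : is_RInt (fun phi => RInt (Qp phi) 0 PI) 0 (2 * PI) (minus (Phi (2 * PI)) (Phi 0))).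
  { apply (is_RInt_derive (V:=R_CompleteNormedModule)).
    intros; apply HPhi.
    intros x _. apply c1_cont.
    apply (c2_c1' (fun u v => RInt (fun t => (fun x _ z => Qp x z) u v t) 0 PI) x 0).
    apply (L1 (fun x _ z => Qp x z) (Rabs x + 1) 0 PI PI_pos'). intros; apply c3_Qp. lra. }
  rewrite Hm in HH. exact HH.
Qed.

End IBP.


Lemma A_ext_at K1 K2 rho : (forall phi theta, K1 rho phi theta = K2 rho phi theta) -> Aint K1 rho = Aint K2 rho.
Proof. intros H. unfold Aint. apply RInt_ext. intros. apply RInt_ext. intros. apply H. Qed.

Lemma is_derive_mult_r (f : R -> R) x a k : is_derive f x a -> is_derive (fun s => f s * k) x (a * k).
Proof. intros H. eapply is_derive_eq. apply (is_derive_mult' f (fun _ => k)). exact H. apply is_derive_const. Req. ring. Qed.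
Lemma is_derive_mult_l (f : R -> R) x a k : is_derive f x a -> is_derive (fun s => k * f s) x (k * a).
Proof. intros H. eapply is_derive_eq. apply (is_derive_mult' (fun _ => k) f). apply is_derive_const. exact H. Req. ring. Qed.

Lemma C1_minus O f g Df Dg : C1v O f Df -> C1v O g Dg ->
  C1v O (fun y => f y - g y) (fun j y => Df j y - Dg j y).
Proof.
  intros Hf Hg. assert (H := C1_plus O f (fun y => -1 * g y) Df (fun j y => 0 * g y + -1 * Dg j y) Hf
     (C1_mult O (fun _ => -1) g (fun _ _ => 0) Dg (C1_const O (-1)) Hg)).
  destruct H as [H1 [H2 H3]]. split; [|split].
  - intros y Hy e He. destruct (H1 y Hy e He) as [d [Hd Hz]]. exists d. split; auto. intros z Hz'.
    replace (f z - g z - (f y - g y)) with (f z + -1 * g z - (f y + -1 * g y)) by ring. auto.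
  - intros j y Hy e He. destruct (H2 j y Hy e He) as [d [Hd Hz]]. exists d. split; auto. intros z Hz'.
    replace (Df j z - Dg j z - (Df j y - Dg j y)) with (Df j z + (0 * g z + -1 * Dg j z) - (Df j y + (0 * g y + -1 * Dg j y))) by ring. auto.
  - intros g0 dg t Ht Hd. specialize (H3 g0 dg t Ht Hd).
    apply (is_derive_ext (fun s => f (g0 s) + -1 * g (g0 s))). intros s; Req; ring.
    eapply is_derive_eq. exact H3. Req. unfold sum3. ring.
Qed.

Lemma C1_sum3 O (f : idx -> vec3 -> R) (Df : idx -> idx -> vec3 -> R) : (forall k, C1v O (f k) (Df k)) ->
  C1v O (fun y => sum3 (fun k => f k y)) (fun j y => sum3 (fun k => Df k j y)).
Proof.
  intros H. unfold sum3.
  apply (C1_plus O (fun y => f I1 y + f I2 y) (f I3) (fun j y => Df I1 j y + Df I2 j y)); auto.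
  apply C1_plus; auto.
Qed.

Lemma mvt_const (B dB : R -> R) R0 rho : Rabs rho < R0 ->
  (forall s, Rabs s < R0 -> is_derive B s (dB s)) -> (forall s, Rabs s < R0 -> dB s = 0) -> B rho = B 0.
Proof.
  intros Hr HB Hd.
  assert (Hin : forall s, Rmin 0 rho <= s <= Rmax 0 rho -> Rabs s < R0).
  { intros s [H1 H2]. unfold Rmin, Rmax in *. destruct (Rle_dec 0 rho);
    unfold Rabs in *; destruct (Rcase_abs s); destruct (Rcase_abs rho); lra. }
  destruct (MVT_gen B 0 rho dB) as [c0 [Hc Heq]].
  - intros x Hx. apply HB. apply Hin. lra.
  - intros x Hx. apply continuity_pt_filterlim. apply (ex_derive_continuous (K:=R_AbsRing) (V:=R_NormedModule) B).
    eexists. apply HB. auto.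
  - rewrite Hd in Heq by auto. lra.
Qed.

Section Flux.
Variables (O : vec3 -> Prop) (c : vec3) (R0 : R) (V : idx -> vec3 -> R) (DV : idx -> idx -> vec3 -> R).
Hypothesis Hball : forall z, norm3 (vsub z c) < R0 -> O z.
Hypothesis HV : forall i, C1v O (V i) (DV i).
Hypothesis Hdiv : forall y, O y -> sum3 (fun i => DV i i y) = 0.

Definition fluxK (r phi theta : R) := sum3 (fun i => sph theta phi i * V i (Y c r phi theta)) * sin theta.
Definition fluxKd (r phi theta : R) :=
  sum3 (fun i => sph theta phi i * sum3 (fun j => sph theta phi j * DV i j (Y c r phi theta))) * sin theta.

Lemma fl_cV i u v t : Rabs u < R0 -> cont_pt (V i) (Y c u v t).
Proof. intros H. exact (proj1 (HV i) _ (Hball _ (Y_in c u v t R0 H))). Qed.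
Lemma fl_cD i j u v t : Rabs u < R0 -> cont_pt (DV i j) (Y c u v t).
Proof. intros H. exact (proj1 (proj2 (HV i)) j _ (Hball _ (Y_in c u v t R0 H))). Qed.

Lemma reg_fluxK : regular R0 fluxK.
Proof.
  intros u v t Hu. unfold fluxK, sum3. simpl. c3auto; cbv beta; first [apply fl_cV | apply fl_cD]; auto.
Qed.
Lemma reg_fluxKd : regular R0 fluxKd.
Proof.
  intros u v t Hu. unfold fluxKd, sum3. simpl. c3auto; cbv beta; first [apply fl_cV | apply fl_cD]; auto.
Qed.

Lemma der_fluxK r phi theta : Rabs r < R0 -> is_derive (fun z => fluxK z phi theta) r (fluxKd r phi theta).
Proof.
  intros Hr. unfold fluxK, fluxKd. apply is_derive_mult_r.
  apply (is_derive_sum3 (fun i z => sph theta phi i * V i (Y c z phi theta))). intros i.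
  apply is_derive_mult_l.
  eapply is_derive_eq.
  apply (proj2 (proj2 (HV i)) (fun z => Y c z phi theta) (sph theta phi)).
  apply Hball, Y_in; auto. intros j; apply dY_r.
  Req. unfold sum3. ring.
Qed.

Lemma flux_zero rho : Rabs rho < R0 -> rho <> 0 -> Aint fluxK rho = 0.
Proof.
  intros Hr Hr0.
  assert (Hrel : forall s, Rabs s < R0 -> s * Aint fluxKd s + 2 * Aint fluxK s = 0).
  { intros s Hs. pose proof (sphere_ibp O c R0 V DV s Hball HV Hs) as H.
    rewrite (A_ext_at _ (fun r p t => (- s) * fluxKd r p t + (-2) * fluxK r p t)) in H.
    2: { intros phi theta. unfold ibp_integrand, fluxKd, fluxK. rewrite Hdiv.
         unfold sum3. ring. apply Hball, Y_in; auto. }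
    assert (R1 : regular R0 (fun r p t => - s * fluxKd r p t)).
    { intros u v t Hu. apply c3_mult. apply c3_const. apply reg_fluxKd; auto. }
    assert (R2 : regular R0 (fun r p t => -2 * fluxK r p t)).
    { intros u v t Hu. apply c3_mult. apply c3_const. apply reg_fluxK; auto. }
    rewrite (A_plus R0 _ _ s R1 R2 Hs) in H.
    rewrite (A_scal R0 fluxKd (- s) s reg_fluxKd Hs) in H.
    rewrite (A_scal R0 fluxK (-2) s reg_fluxK Hs) in H.
    lra. }
  set (B := fun s => s * s * Aint fluxK s).
  assert (HB : B rho = B 0).
  { apply (mvt_const B (fun s => (s + s) * Aint fluxK s + s * s * Aint fluxKd s) R0); auto.
    - intros s Hs. unfold B. apply (is_derive_mult' (fun z => z * z) (Aint fluxK)).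
      eapply is_derive_eq. apply (is_derive_mult' (fun z => z) (fun z => z)); apply is_derive_id. Req. ring.
      apply (A_deriv R0); auto using reg_fluxK, reg_fluxKd, der_fluxK.
    - intros s Hs. specialize (Hrel s Hs).
      replace ((s + s) * Aint fluxK s + s * s * Aint fluxKd s) with (s * (s * Aint fluxKd s + 2 * Aint fluxK s)) by ring.
      rewrite Hrel. ring. }
  unfold B in HB. replace (0 * 0 * Aint fluxK 0) with 0 in HB by ring.
  assert (rho * rho <> 0) by (apply Rmult_integral_contrapositive; auto).
  apply (Rmult_eq_reg_l (rho * rho)); auto. lra.
Qed.

End Flux.


Lemma RInt_sin : RInt sin 0 PI = 2.
Proof.
  apply is_RInt_unique.
  assert (H : is_RInt sin 0 PI (minus ((fun t => - cos t) PI) ((fun t => - cos t) 0))).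
  { apply (is_RInt_derive (V:=R_CompleteNormedModule) (fun t => - cos t) sin).
    intros; auto_derive; auto; ring. intros; apply continuous_sin. }
  replace 2 with (minus ((fun t => - cos t) PI) ((fun t => - cos t) 0)). exact H.
  simpl. rewrite cos_PI, cos_0. Req. ring.
Qed.

Lemma A_sin rho : Aint (fun _ _ theta => sin theta) rho = 4 * PI.
Proof.
  unfold Aint. rewrite (RInt_ext _ (fun _ => 2)). rewrite RInt_const. Req. ring.
  intros; apply RInt_sin.
Qed.

Lemma A_sq (a : vec3) rho : Aint (fun _ phi theta => (dot (sph theta phi) a) ^ 2 * sin theta) rho = dot a a * (4 * PI) / 3.
Proof.
  set (V := fun i (y : vec3) => a i * sum3 (fun j => a j * y j)).
  set (DV := fun i j (_ : vec3) => a i * a j).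
  assert (HV : forall i, C1v (fun _ => True) (V i) (DV i)).
  { intros i. eapply C1_ext.
    - apply (C1_mult _ (fun _ => a i) (fun y => sum3 (fun j => a j * y j))).
      apply C1_const. apply (C1_sum3 _ (fun j y => a j * y j)). intros j.
      apply (C1_mult _ (fun _ => a j) (fun y => y j)). apply C1_const. apply C1_coord.
    - intros y. reflexivity.
    - intros j y _. unfold DV. destruct i, j; unfold sum3, ebasis; simpl; ring.
    - intros y _. exists 1. split. lra. auto. }
  assert (Hb : forall z, norm3 (vsub z (fun _ => 0)) < 2 -> True) by auto.
  assert (H := sphere_ibp (fun _ => True) (fun _ => 0) 2 V DV 1 Hb HV ltac:(rewrite Rabs_R1; lra)).
  assert (Hreg : forall K, (forall u v t, c3 K u v t) -> regular 2 K) by (intros K HK u v t _; auto).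
  rewrite (A_ext_at _ (fun r phi theta => dot a a * sin theta + (-3) * ((dot (sph theta phi) a) ^ 2 * sin theta))) in H.
  2: { intros phi theta. unfold ibp_integrand, V, DV, Y, dot, sum3, vadd, vscal, sph. simpl.
       pose proof (sin2_cos2 theta) as H1. pose proof (sin2_cos2 phi) as H2. unfold Rsqr in *.
       nsatz. }
  rewrite (A_plus 2 (fun _ _ t => dot a a * sin t) (fun _ p t => -3 * ((dot (sph t p) a) ^ 2 * sin t))) in H.
  rewrite (A_scal 2 (fun _ _ t => sin t) (dot a a)) in H.
  rewrite (A_scal 2 (fun _ p t => (dot (sph t p) a) ^ 2 * sin t) (-3)) in H.
  rewrite A_sin in H.
  change (Aint (fun _ phi theta => (dot (sph theta phi) a) ^ 2 * sin theta) rho)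
    with (Aint (fun _ phi theta => (dot (sph theta phi) a) ^ 2 * sin theta) 1). lra.
  all: try (rewrite Rabs_R1; lra).
  all: apply Hreg; intros; unfold dot, sum3, sph; simpl; c3auto.
Qed.


Lemma ball_inside (Omega : vec3 -> Prop) x d :
  open3 Omega -> Omega x -> (forall z, boundary Omega z -> d <= norm3 (vsub z x)) ->
  forall z, norm3 (vsub z x) < d -> Omega z.
Proof.
  intros Hop Hx Hb z Hz. apply NNPP. intros Hnz.
  set (w := vsub z x). set (seg := fun t => vadd x (vscal t w)).
  assert (Eseg : forall s t, vsub (seg s) (seg t) = vscal (s - t) w)
    by (intros; apply vext; intros i; unfold seg, vsub, vadd, vscal; ring).
  assert (Eseg0 : forall t, vsub (seg t) x = vscal t w)
    by (intros; apply vext; intros i; unfold seg, vsub, vadd, vscal; ring).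
  assert (Hs0 : seg 0 = x) by (apply vext; intros i; unfold seg, vadd, vscal; ring).
  assert (Hs1 : seg 1 = z) by (apply vext; intros i; unfold seg, w, vadd, vscal, vsub; ring).
  assert (Hw : 0 <= norm3 w) by apply norm3_nonneg.
  set (E := fun t => 0 <= t <= 1 /\ forall s, 0 <= s <= t -> Omega (seg s)).
  assert (HE0 : E 0).
  { split. lra. intros s Hs. replace s with 0 by lra. rewrite Hs0; auto. }
  destruct (completeness E) as [m [Hub Hlub]].
  { exists 1. intros t [Ht _]. lra. }
  { exists 0. auto. }
  assert (Hm0 : 0 <= m) by (apply Hub; auto).
  assert (Hm1 : m <= 1) by (apply Hlub; intros t [Ht _]; lra).
  assert (HA : forall s, 0 <= s < m -> Omega (seg s)).
  { intros s Hs. apply NNPP. intros Hn.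
    assert (m <= s). { apply Hlub. intros t [Ht Ht']. destruct (Rle_lt_dec t s); auto.
      exfalso. apply Hn. apply Ht'. lra. }
    lra. }
  assert (HB : ~ Omega (seg m)).
  { intros Hm. destruct (Hop _ Hm) as [e [He Hball]].
    destruct (Req_dec m 1) as [Hm1'|Hm1'].
    - subst m. rewrite Hs1 in Hm. auto.
    - set (t := Rmin 1 (m + e / (2 * (norm3 w + 1)))).
      assert (Hep : 0 < e / (2 * (norm3 w + 1))) by (apply Rdiv_lt_0_compat; lra).
      assert (Ht1 : m < t) by (unfold t; apply Rmin_glb_lt; lra).
      assert (Et : E t).
      { split. split. lra. apply Rmin_l. intros s Hs.
        destruct (Rlt_le_dec s m). apply HA; lra.
        apply Hball. rewrite Eseg, norm3_scal.
        assert (Hsm : Rabs (s - m) <= e / (2 * (norm3 w + 1))).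
        { rewrite Rabs_right by lra. assert (t <= m + e / (2 * (norm3 w + 1))) by apply Rmin_r. lra. }
        apply Rle_lt_trans with (e / (2 * (norm3 w + 1)) * norm3 w).
        apply Rmult_le_compat_r; auto.
        apply (Rmult_lt_reg_r (2 * (norm3 w + 1))). lra.
        replace (e / (2 * (norm3 w + 1)) * norm3 w * (2 * (norm3 w + 1))) with (e * norm3 w) by (field; lra).
        nra. }
      pose proof (Hub t Et). lra. }
  assert (Hmpos : 0 < m).
  { destruct (Req_dec m 0) as [H0|H0]; [|lra]. rewrite H0, Hs0 in HB. contradiction. }
  assert (Hbd : boundary Omega (seg m)).
  { split.
    - intros e He. set (s := Rmax 0 (m - e / (2 * (norm3 w + 1)))).
      assert (Hep : 0 < e / (2 * (norm3 w + 1))) by (apply Rdiv_lt_0_compat; lra).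
      assert (Hs1' : s < m) by (unfold s; apply Rmax_lub_lt; lra).
      assert (Hs2 : 0 <= s) by apply Rmax_l.
      assert (Hs3 : m - e / (2 * (norm3 w + 1)) <= s) by apply Rmax_r.
      exists (seg s). split. apply HA; lra.
      rewrite Eseg, norm3_scal. rewrite Rabs_left1 by lra.
      apply Rle_lt_trans with (e / (2 * (norm3 w + 1)) * norm3 w).
      apply Rmult_le_compat_r; lra.
      apply (Rmult_lt_reg_r (2 * (norm3 w + 1))). lra.
      replace (e / (2 * (norm3 w + 1)) * norm3 w * (2 * (norm3 w + 1))) with (e * norm3 w) by (field; lra).
      nra.
    - intros [e [He Hin]]. apply HB. apply Hin.
      replace (vsub (seg m) (seg m)) with (fun _ : idx => 0) by (apply vext; intros i; unfold vsub; ring).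
      rewrite norm3_zero. auto. }
  pose proof (Hb _ Hbd) as Hd. rewrite Eseg0, norm3_scal, Rabs_right in Hd by lra.
  fold w in Hz. nra.
Qed.


Lemma Ck2_Ck1 O f : Ck 2 O f -> Ck 1 O f.
Proof. intros [Hc Hi]. split; auto. intros i. destruct (Hi i) as [Hd [Hc' _]]. split; auto. Qed.
Lemma Ck2_part O f i : Ck 2 O f -> Ck 1 O (partial i f).
Proof. intros [Hc Hi]. apply (proj2 (Hi i)). Qed.

Section Main.
Variables (Omega : vec3 -> Prop) (x : vec3) (r d : R) (u : vec3 -> vec3) (v : vec3) (p : vec3 -> R).
Hypothesis Hop : open3 Omega.
Hypothesis Hr : 0 < r.
Hypothesis Hrd : r < d.
Hypothesis Hball : forall z, norm3 (vsub z x) < d -> Omega z.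
Hypothesis C1p : C1v Omega p (fun j => partial j p).
Hypothesis C1dp : forall i, C1v Omega (partial i p) (fun j => partial j (partial i p)).
Hypothesis C1u : forall k, C1v Omega (ucomp u k) (fun j => partial j (ucomp u k)).
Hypothesis C1du : forall k l, C1v Omega (partial l (ucomp u k)) (fun j => partial j (partial l (ucomp u k))).
Hypothesis Hdivu : forall y, Omega y -> sum3 (fun i => partial i (ucomp u i) y) = 0.
Hypothesis Hpde : forall y, Omega y -> - laplacian p y = div (convect u) y.

Lemma Hcp y : Omega y -> cont_pt p y. Proof. intros H. exact (proj1 C1p y H). Qed.
Lemma Hcdp i y : Omega y -> cont_pt (partial i p) y. Proof. intros H. exact (proj1 (C1dp i) y H). Qed.
Lemma Hcu k y : Omega y -> cont_pt (ucomp u k) y. Proof. intros H. exact (proj1 (C1u k) y H). Qed.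
Lemma Hcu' k y : Omega y -> cont_pt (fun w => u w k) y. Proof. intros H. exact (Hcu k y H). Qed.
Lemma Hcdu k l y : Omega y -> cont_pt (partial l (ucomp u k)) y. Proof. intros H. exact (proj1 (C1du k l) y H). Qed.

Lemma inY r' phi theta : Rabs r' < d -> Omega (Y x r' phi theta).
Proof. intros H. apply Hball, Y_in, H. Qed.
Lemma inY' r' phi theta : Rabs r' < d -> Omega (vadd x (vscal r' (sph theta phi))).
Proof. apply inY. Qed.

Ltac c3step2 := first [ c3step
  | match goal with |- c3 (fun x y z => ?U (@?M x y z) ?i) ?a ?b ?c => apply (c3_vcomp M (fun w => U w i)) end ].
Ltac cpt := cbv beta;
   first [apply Hcp | apply Hcdp | apply Hcu | apply Hcu' | apply Hcdu];
   first [apply inY; assumption | apply inY'; assumption | idtac].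
Ltac c3full := repeat c3step2; try cpt.

Definition g1 i (y : vec3) := partial i p y + sum3 (fun j => ucomp u j y * partial j (ucomp u i) y).
Definition Dg1 i l (y : vec3) := partial l (partial i p) y +
  sum3 (fun j => partial l (ucomp u j) y * partial j (ucomp u i) y + ucomp u j y * partial l (partial j (ucomp u i)) y).

Lemma C1g1 i : C1v Omega (g1 i) (Dg1 i).
Proof.
  unfold g1, Dg1. apply (C1_plus Omega (partial i p) (fun y => sum3 (fun j => ucomp u j y * partial j (ucomp u i) y))).
  apply C1dp.
  apply (C1_sum3 Omega (fun j y => ucomp u j y * partial j (ucomp u i) y)). intros j.
  apply (C1_mult Omega (ucomp u j) (partial j (ucomp u i))). apply C1u. apply C1du.
Qed.

Lemma div_g1 y : Omega y -> sum3 (fun i => Dg1 i i y) = 0.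
Proof.
  intros Hy. pose proof (Hpde y Hy) as H.
  assert (E : forall i, partial i (ucomp (convect u) i) y =
     sum3 (fun j => partial i (ucomp u j) y * partial j (ucomp u i) y + ucomp u j y * partial i (partial j (ucomp u i)) y)).
  { intros i. apply (C1_partial Omega (ucomp (convect u) i)
       (fun l y => sum3 (fun j => partial l (ucomp u j) y * partial j (ucomp u i) y + ucomp u j y * partial l (partial j (ucomp u i)) y))).
    auto.
    apply (C1_sum3 Omega (fun j y => ucomp u j y * partial j (ucomp u i) y)). intros j.
    apply (C1_mult Omega (ucomp u j) (partial j (ucomp u i))). apply C1u. apply C1du. }
  unfold div, laplacian in H. unfold sum3 in H at 1 2. rewrite !E in H.
  unfold Dg1. unfold sum3 in *. lra.
Qed.

Lemma flux_g1 rho : 0 < rho < d -> Aint (fluxK x g1) rho = 0.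
Proof.
  intros Hrho. apply (flux_zero Omega x d g1 Dg1); auto. apply C1g1. apply div_g1.
  rewrite Rabs_right; lra. lra.
Qed.

Definition hf i (y : vec3) := sum3 (fun j => v j * partial j (ucomp u i) y).

Lemma flux_h rho : 0 < rho < d -> Aint (fluxK x hf) rho = 0.
Proof.
  intros Hrho.
  set (N := norm3 v). assert (HN : 0 <= N) by apply norm3_nonneg.
  set (eta := (d - rho) / (N + 1)).
  assert (Heta : 0 < eta) by (unfold eta; apply Rdiv_lt_0_compat; lra).
  assert (HsN : forall s, Rabs s < eta -> Rabs s * N < d - rho).
  { intros s Hs. apply Rle_lt_trans with (Rabs s * (N + 1)). pose proof (Rabs_pos s); nra.
    apply (Rmult_lt_reg_r (/ (N + 1))). apply Rinv_0_lt_compat; lra.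
    rewrite Rmult_assoc, Rinv_r, Rmult_1_r by lra. exact Hs. }
  set (cs := fun s => vadd x (vscal s v)).
  assert (Hcs : forall s z, norm3 (vsub z (cs s)) < d - Rabs s * N -> Omega z).
  { intros s z Hz. apply Hball.
    replace (vsub z x) with (vadd (vsub z (cs s)) (vscal s v)) by (apply vext; intros i; unfold cs, vsub, vadd, vscal; ring).
    eapply Rle_lt_trans. apply norm3_triangle. rewrite norm3_scal. fold N. lra. }
  assert (inYs : forall s phi theta, Rabs s < eta -> Omega (Y (cs s) rho phi theta)).
  { intros s phi theta Hs. apply (Hcs s). apply Y_in. specialize (HsN s Hs). rewrite Rabs_right; lra. }
  set (Ks := fun s phi theta => sum3 (fun i => sph theta phi i * ucomp u i (Y (cs s) rho phi theta)) * sin theta).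
  set (Kds := fun s phi theta => sum3 (fun i => sph theta phi i *
        sum3 (fun j => v j * partial j (ucomp u i) (Y (cs s) rho phi theta))) * sin theta).
  assert (Hzero : forall s, Rabs s < eta -> Aint Ks s = 0).
  { intros s Hs. apply (flux_zero Omega (cs s) (d - Rabs s * N) (ucomp u) (fun i j => partial j (ucomp u i))).
    apply Hcs. apply C1u. apply Hdivu.
    specialize (HsN s Hs). rewrite Rabs_right; lra. lra. }
  assert (RK : regular eta Ks).
  { intros a b c Ha. unfold Ks, sum3, cs. simpl. c3full; apply inYs; auto. }
  assert (RKd : regular eta Kds).
  { intros a b c Ha. unfold Kds, sum3, cs. simpl. c3full; apply inYs; auto. }
  assert (HD : forall s phi theta, Rabs s < eta -> is_derive (fun z => Ks z phi theta) s (Kds s phi theta)).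
  { intros s phi theta Hs. unfold Ks, Kds. apply is_derive_mult_r.
    apply (is_derive_sum3 (fun i z => sph theta phi i * ucomp u i (Y (cs z) rho phi theta))). intros i.
    apply is_derive_mult_l.
    apply (proj2 (proj2 (C1u i)) (fun z => Y (cs z) rho phi theta) v).
    apply inYs; auto. intros j. unfold Y, cs, vadd, vscal. auto_derive; auto. ring. }
  assert (Hd0 : Rabs 0 < eta) by (rewrite Rabs_R0; auto).
  pose proof (A_deriv eta Ks Kds 0 RK RKd Hd0 HD) as HA.
  assert (HA0 : is_derive (fun _ : R => 0) 0 (Aint Kds 0)).
  { apply (is_derive_ext_loc (Aint Ks)). exists (mkposreal eta Heta). intros y Hy. apply Hzero.
    change (Rabs (y - 0) < eta) in Hy. rewrite Rminus_0_r in Hy. auto. auto. }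
  assert (Z : Aint Kds 0 = 0).
  { apply is_derive_unique in HA0. rewrite <- HA0. apply Derive_const. }
  rewrite <- Z. unfold Aint, Kds, fluxK, hf.
  replace (cs 0) with x by (apply vext; intros i; unfold cs, vadd, vscal; ring). reflexivity.
Qed.

Definition Kg (r' phi theta : R) := sum3 (fun i => sph theta phi i * (partial i p (Y x r' phi theta) +
   sum3 (fun j => (ucomp u j (Y x r' phi theta) - v j) * partial j (ucomp u i) (Y x r' phi theta)))) * sin theta.

Lemma reg_fluxg1 : regular d (fluxK x g1).
Proof. intros a b c Ha. unfold fluxK, g1, sum3. simpl. c3full. Qed.
Lemma reg_fluxhf : regular d (fluxK x hf).
Proof. intros a b c Ha. unfold fluxK, hf, sum3. simpl. c3full. Qed.

Lemma flux_g rho : 0 < rho < d -> Aint Kg rho = 0.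
Proof.
  intros Hrho.
  assert (Hd : Rabs rho < d) by (rewrite Rabs_right; lra).
  rewrite (A_ext_at _ (fun r' phi theta => fluxK x g1 r' phi theta + (-1) * fluxK x hf r' phi theta)).
  rewrite (A_plus d). rewrite (A_scal d). rewrite flux_g1, flux_h; auto. ring.
  apply reg_fluxhf. auto. apply reg_fluxg1.
  intros a b c Ha. apply c3_mult. apply c3_const. apply reg_fluxhf; auto. auto.
  intros phi theta. unfold Kg, fluxK, g1, hf, sum3, ucomp. ring.
Qed.

Definition Vf j (y : vec3) := p y * (y j - x j) + sum3 (fun k => (y k - x k) * (ucomp u k y - v k)) * (ucomp u j y - v j).
Definition DVf j l (y : vec3) := (partial l p y * (y j - x j) + p y * (ebasis l j - 0)) +
  (sum3 (fun k => (ebasis l k - 0) * (ucomp u k y - v k) + (y k - x k) * (partial l (ucomp u k) y - 0)) * (ucomp u j y - v j)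
   + sum3 (fun k => (y k - x k) * (ucomp u k y - v k)) * (partial l (ucomp u j) y - 0)).

Lemma C1V j : C1v Omega (Vf j) (DVf j).
Proof.
  unfold Vf, DVf.
  apply (C1_plus Omega (fun y => p y * (y j - x j)) (fun y => sum3 (fun k => (y k - x k) * (ucomp u k y - v k)) * (ucomp u j y - v j))).
  apply (C1_mult Omega p (fun y => y j - x j)). exact C1p.
  apply (C1_minus Omega (fun y => y j) (fun _ => x j)). apply C1_coord. apply C1_const.
  apply (C1_mult Omega (fun y => sum3 (fun k => (y k - x k) * (ucomp u k y - v k))) (fun y => ucomp u j y - v j)).
  apply (C1_sum3 Omega (fun k y => (y k - x k) * (ucomp u k y - v k))). intros k.
  apply (C1_mult Omega (fun y => y k - x k) (fun y => ucomp u k y - v k)).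
  apply (C1_minus Omega (fun y => y k) (fun _ => x k)). apply C1_coord. apply C1_const.
  apply (C1_minus Omega (ucomp u k) (fun _ => v k)). apply C1u. apply C1_const.
  apply (C1_minus Omega (ucomp u j) (fun _ => v j)). apply C1u. apply C1_const.
Qed.

Definition Hi (r' phi theta : R) :=
  (3 * (dot (sph theta phi) (vsub (u (vadd x (vscal r' (sph theta phi)))) v)) ^ 2
   - dot (vsub (u (vadd x (vscal r' (sph theta phi)))) v) (vsub (u (vadd x (vscal r' (sph theta phi)))) v)) * sin theta.
Definition Gd (r' phi theta : R) :=
  (sum3 (fun j => sph theta phi j * partial j p (Y x r' phi theta))
   + 2 * dot (sph theta phi) (vsub (u (Y x r' phi theta)) v)
       * sum3 (fun i => sph theta phi i * sum3 (fun j => sph theta phi j * partial j (ucomp u i) (Y x r' phi theta))))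
  * sin theta.

Lemma ibp_identity rho phi theta : Rabs rho < d ->
  ibp_integrand x Vf DVf rho phi theta = rho * ((-1) * Hi rho phi theta + rho * Kg rho phi theta + (- rho) * Gd rho phi theta).
Proof.
  intros Hd. pose proof (Hdivu _ (inY rho phi theta Hd)) as Hdv.
  unfold ibp_integrand, Vf, DVf, Hi, Kg, Gd, Y in *.
  set (y := vadd x (vscal rho (sph theta phi))) in *.
  assert (E1 : y I1 = x I1 + rho * (sin theta * cos phi)) by reflexivity.
  assert (E2 : y I2 = x I2 + rho * (sin theta * sin phi)) by reflexivity.
  assert (E3 : y I3 = x I3 + rho * cos theta) by reflexivity.
  unfold ucomp, dot, vsub, sum3, ebasis in *. simpl in *.
  rewrite E1, E2, E3.
  pose proof (sin2_cos2 theta) as H1. pose proof (sin2_cos2 phi) as H2. unfold Rsqr in *.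
  nsatz.
Qed.

Lemma reg_plus R0 K1 K2 : regular R0 K1 -> regular R0 K2 -> regular R0 (fun a b c => K1 a b c + K2 a b c).
Proof. intros H1 H2 a b c H. apply c3_plus; auto. Qed.
Lemma reg_scal R0 K k : regular R0 K -> regular R0 (fun a b c => k * K a b c).
Proof. intros H a b c Ha. apply c3_mult. apply c3_const. auto. Qed.

Definition KG (r' phi theta : R) := p (vadd x (vscal r' (sph theta phi))) * sin theta +
  (dot (sph theta phi) (vsub (u (vadd x (vscal r' (sph theta phi)))) v)) ^ 2 * sin theta.

Lemma reg_KG : regular d KG.
Proof. intros a b c Ha. unfold KG, dot, vsub, sum3. simpl. c3full. Qed.
Lemma reg_Gd : regular d Gd.
Proof. intros a b c Ha. unfold Gd, dot, vsub, sum3. simpl. c3full. Qed.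
Lemma reg_Hi : regular d Hi.
Proof. intros a b c Ha. unfold Hi, dot, vsub, sum3. simpl. c3full. Qed.
Lemma reg_Kg : regular d Kg.
Proof. intros a b c Ha. unfold Kg, dot, vsub, sum3. simpl. c3full. Qed.

Lemma der_KG rho phi theta : Rabs rho < d -> is_derive (fun z => KG z phi theta) rho (Gd rho phi theta).
Proof.
  intros Hd.
  assert (Hp' : is_derive (fun z => p (Y x z phi theta)) rho (sum3 (fun j => sph theta phi j * partial j p (Y x rho phi theta)))).
  { apply (proj2 (proj2 C1p) (fun z => Y x z phi theta) (sph theta phi)). apply inY; auto. intros j; apply dY_r. }
  assert (Hu' : forall i, is_derive (fun z => ucomp u i (Y x z phi theta) - v i) rho
      (sum3 (fun j => sph theta phi j * partial j (ucomp u i) (Y x rho phi theta)))).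
  { intros i. eapply is_derive_eq. apply is_derive_plus'.
    apply (proj2 (proj2 (C1u i)) (fun z => Y x z phi theta) (sph theta phi)). apply inY; auto. intros j; apply dY_r.
    apply is_derive_const. Req. ring. }
  set (F := fun z => sum3 (fun i => sph theta phi i * (ucomp u i (Y x z phi theta) - v i))).
  set (DF := sum3 (fun i => sph theta phi i * sum3 (fun j => sph theta phi j * partial j (ucomp u i) (Y x rho phi theta)))).
  assert (HF : is_derive F rho DF).
  { unfold F, DF. apply (is_derive_sum3 (fun i z => sph theta phi i * (ucomp u i (Y x z phi theta) - v i))).
    intros i. apply is_derive_mult_l. apply Hu'. }
  apply (is_derive_ext (fun z => p (Y x z phi theta) * sin theta + (F z * F z) * sin theta)).
  { intros t. unfold KG, F, Y, dot, vsub, sum3, ucomp. simpl. ring. }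
  eapply is_derive_eq. apply is_derive_plus'. apply is_derive_mult_r. exact Hp'.
  apply is_derive_mult_r. apply (is_derive_mult' F F). exact HF. exact HF.
  unfold Gd, F, DF, Y, dot, vsub, sum3, ucomp. simpl. ring.
Qed.

Lemma FTC : RInt (Aint Gd) 0 r = Aint KG r - Aint KG 0.
Proof.
  apply is_RInt_unique.
  apply (is_RInt_derive (V:=R_CompleteNormedModule) (Aint KG) (Aint Gd)).
  - intros t Ht. rewrite Rmin_left, Rmax_right in Ht by lra.
    apply (A_deriv d). apply reg_KG. apply reg_Gd. rewrite Rabs_right; lra.
    intros; apply der_KG; auto.
  - intros t Ht. rewrite Rmin_left, Rmax_right in Ht by lra.
    apply c1_cont. apply (A_c1 d). apply reg_Gd. rewrite Rabs_right; lra.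
Qed.

Lemma Hi_rel rho : 0 < rho < r -> Aint Hi rho = - rho * Aint Gd rho.
Proof.
  intros Hrho. assert (Hd : Rabs rho < d) by (rewrite Rabs_right; lra).
  pose proof (sphere_ibp Omega x d Vf DVf rho Hball C1V Hd) as H.
  rewrite (A_ext_at _ (fun r' phi theta => rho * ((-1) * Hi r' phi theta + rho * Kg r' phi theta + (- rho) * Gd r' phi theta))) in H.
  2: { intros phi theta. apply ibp_identity; auto. }
  assert (R1 := reg_scal d Hi (-1) reg_Hi).
  assert (R2 := reg_scal d Kg rho reg_Kg).
  assert (R3 := reg_scal d Gd (- rho) reg_Gd).
  assert (R12 := reg_plus d _ _ R1 R2).
  assert (R123 := reg_plus d _ _ R12 R3).
  rewrite (A_scal d _ rho rho R123 Hd) in H.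
  rewrite (A_plus d _ _ rho R12 R3 Hd) in H.
  rewrite (A_plus d _ _ rho R1 R2 Hd) in H.
  rewrite (A_scal d _ _ rho reg_Hi Hd), (A_scal d _ _ rho reg_Kg Hd), (A_scal d _ _ rho reg_Gd Hd) in H.
  rewrite flux_g in H by lra.
  assert (rho <> 0) by lra.
  apply (Rmult_eq_reg_l rho); auto. nra.
Qed.

Lemma KG_split rho : Rabs rho < d ->
  Aint KG rho = Aint (fun r' phi theta => p (vadd x (vscal r' (sph theta phi))) * sin theta) rho
   + Aint (fun r' phi theta => (dot (sph theta phi) (vsub (u (vadd x (vscal r' (sph theta phi)))) v)) ^ 2 * sin theta) rho.
Proof.
  intros Hd. unfold KG. apply (A_plus d); auto.
  intros a b c Ha. simpl. c3full.
  intros a b c Ha. unfold dot, vsub, sum3. simpl. c3full.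
Qed.

Lemma KG0 : Aint KG 0 = 4 * PI * p x + 4 * PI / 3 * dot (vsub (u x) v) (vsub (u x) v).
Proof.
  assert (Hx0 : forall xi, vadd x (vscal 0 xi) = x) by (intros; apply vext; intros i; unfold vadd, vscal; ring).
  rewrite (A_ext_at _ (fun _ phi theta => p x * sin theta + (dot (sph theta phi) (vsub (u x) v)) ^ 2 * sin theta)).
  2: { intros phi theta. unfold KG. rewrite Hx0. reflexivity. }
  assert (Hreg : forall K, (forall a b c, c3 K a b c) -> regular 1 K) by (intros K HK a b c _; auto).
  rewrite (A_plus 1 (fun _ _ t => p x * sin t) (fun _ p0 t => (dot (sph t p0) (vsub (u x) v)) ^ 2 * sin t)).
  rewrite (A_scal 1 (fun _ _ t => sin t) (p x)). rewrite A_sin, A_sq. field.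
  all: try (rewrite Rabs_R0; lra).
  all: apply Hreg; intros; unfold dot, sum3, sph; simpl; c3auto.
Qed.

End Main.



Theorem lemma2 (Omega : vec3 -> Prop) (x : vec3) (r : R)
  (u : vec3 -> vec3) (v : vec3) (p : vec3 -> R) :
  open3 Omega ->
  Omega x ->
  0 < r ->
  lt_dist_boundary r x Omega ->
  (forall i, Ck 2 Omega (ucomp u i)) ->
  (forall y, Omega y -> div u y = 0) ->
  Ck 2 Omega p ->
  (forall y, Omega y -> - laplacian p y = div (convect u) y) ->
  p x + / 3 * dot (vsub (u x) v) (vsub (u x) v)
  = sph_mean p x r
    + sph_avg (fun xi => (dot xi (vsub (u (vadd x (vscal r xi))) v)) ^ 2)
    + RInt (fun rho => / rho *
        sph_avg (fun xi =>
          3 * (dot xi (vsub (u (vadd x (vscal rho xi))) v)) ^ 2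
          - dot (vsub (u (vadd x (vscal rho xi))) v)
                (vsub (u (vadd x (vscal rho xi))) v))) 0 r.
Proof.
  intros Hop Hx Hr Hdist Hu Hdiv Hp Hpde.
  destruct Hdist as [d [Hrd Hdb]].
  pose proof (ball_inside Omega x d Hop Hx Hdb) as Hball.
  pose proof (C1_of_Ck1 Omega p Hop (Ck2_Ck1 _ _ Hp)) as C1p.
  assert (C1dp : forall i, C1v Omega (partial i p) (fun j => partial j (partial i p)))
    by (intros i; apply C1_of_Ck1; auto; apply Ck2_part; auto).
  assert (C1u : forall k, C1v Omega (ucomp u k) (fun j => partial j (ucomp u k)))
    by (intros k; apply C1_of_Ck1; auto; apply Ck2_Ck1; auto).
  assert (C1du : forall k l, C1v Omega (partial l (ucomp u k)) (fun j => partial j (partial l (ucomp u k))))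
    by (intros k l; apply C1_of_Ck1; auto; apply Ck2_part; auto).
  assert (Hdivu : forall y, Omega y -> sum3 (fun i => partial i (ucomp u i) y) = 0) by exact Hdiv.
  assert (Hd : Rabs r < d) by (rewrite Rabs_right; lra).
  assert (HF : RInt (Aint (Gd x u v p)) 0 r = Aint (KG x u v p) r - Aint (KG x u v p) 0)
    by (eapply (FTC Omega x r d u v p); eauto).
  assert (HS := KG_split Omega x d u v p Hball C1p C1u r Hd).
  pose proof (KG0 x u v p) as H0.
  assert (HPI : PI <> 0) by (pose proof PI_RGT_0; lra).
  assert (HI : RInt (fun rho => / rho *
        sph_avg (fun xi =>
          3 * (dot xi (vsub (u (vadd x (vscal rho xi))) v)) ^ 2
          - dot (vsub (u (vadd x (vscal rho xi))) v)
                (vsub (u (vadd x (vscal rho xi))) v))) 0 r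
     = - / (4 * PI) * RInt (Aint (Gd x u v p)) 0 r).
  { rewrite (RInt_ext _ (fun rho => - / (4 * PI) * Aint (Gd x u v p) rho)).
    - apply (RInt_scal (V:=R_CompleteNormedModule)).
      apply (ex_RInt_continuous (V:=R_CompleteNormedModule)). intros t Ht.
      rewrite Rmin_left, Rmax_right in Ht by lra.
      apply c1_cont. apply (A_c1 d). eapply (reg_Gd Omega x d u v p); eauto. rewrite Rabs_right; lra.
    - intros rho Hrho. rewrite Rmin_left, Rmax_right in Hrho by lra.
      change (sph_avg (fun xi => 3 * (dot xi (vsub (u (vadd x (vscal rho xi))) v)) ^ 2
          - dot (vsub (u (vadd x (vscal rho xi))) v) (vsub (u (vadd x (vscal rho xi))) v)))
        with (/ (4 * PI) * Aint (Hi x u v) rho).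
      rewrite (Hi_rel Omega x r d u v p); eauto. Req. field. split; lra. }
  rewrite HI, HF.
  change (sph_mean p x r) with (/ (4 * PI) * Aint (fun r' phi theta => p (vadd x (vscal r' (sph theta phi))) * sin theta) r).
  change (sph_avg (fun xi => (dot xi (vsub (u (vadd x (vscal r xi))) v)) ^ 2))
    with (/ (4 * PI) * Aint (fun r' phi theta => (dot (sph theta phi) (vsub (u (vadd x (vscal r' (sph theta phi)))) v)) ^ 2 * sin theta) r).
  rewrite HS, H0. field. auto.
Qed.
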